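(* Let $a,b,c\geq 1$ be integers, put $v=a+b+c+1$ and $L=\{1^a,2^b,8^c\}$, and suppose $8\leq\lfloor v/2\rfloor$. Then there exists a Hamiltonian path $H$ of $K_v$ with $\ell(H)=L$ if and only if for every divisor $d$ of $v$, the number of elements of $L$ (with multiplicity) that are multiples of $d$ does not exceed $v-d$.
   Context: $K_v$ is the complete graph on $\{0,1,\dots,v-1\}$. The length of an edge $[x,y]$ is $\ell(x,y)=\min(|x-y|,\,v-|x-y|)$, and for a subgraph $\Gamma$, $\ell(\Gamma)$ is the multiset of lengths of its edges. $\{1^a,2^b,8^c\}$ is the multiset with $a$ copies of $1$, $b$ copies of $2$, $c$ copies of $8$. (The paper phrases this as ''$\mathrm{BHR}(\{1^a,2^b,8^c\})$ holds''.) *)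

(* Defs.v *)
From mathcomp Require Import all_boot.
Set Implicit Arguments. Unset Strict Implicit. Unset Printing Implicit Defensive.

Definition absdiff (x y : nat) : nat := if x <= y then y - x else x - y.

Definition ell (v x y : nat) : nat := minn (absdiff x y) (v - absdiff x y).

(* A Hamiltonian path of K_v, given as the sequence of its vertices in order:
   every vertex 0..v-1 occurs exactly once. *)
Definition ham_path (v : nat) (h : seq nat) : Prop := perm_eq h (iota 0 v).

Definition path_lengths (v : nat) (h : seq nat) : seq nat :=
  [seq ell v e.1 e.2 | e <- zip h (behead h)].

Definition L128 (a b c : nat) : seq nat := nseq a 1 ++ nseq b 2 ++ nseq c 8.

(* Main.v *)
Require Import Defs.
From mathcomp Require Import all_boot zify.
Set Implicit Arguments. Unset Strict Implicit. Unset Printing Implicit Defensive.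


Definition edges (h : seq nat) := zip h (behead h).
Definition cross p (e : nat * nat) :=
  if e.1 <= e.2 then (e.1 < p) && (p <= e.2) else (e.2 < p) && (p <= e.1).
Definition mx (e : nat * nat) := if e.1 <= e.2 then e.2 else e.1.
Definition dd (e : nat * nat) := absdiff e.1 e.2.
Definition desig p k e := cross p e && (dd e == k).
Definition edge_okb v p k e :=
  if cross p e then (dd e == k) || ((v - dd e <= 8) && (dd e != k)) else dd e <= 8.
Definition cutb v h p k :=
  [&& 17 <= v, 0 < k, k <= 8, p + k <= v, all (edge_okb v p k) (edges h) &
      perm_eq [seq mx e | e <- edges h & desig p k e] (iota p k)].
Definition ff p k z := if z < p then z else z + k.
Definition Ep p k (e : nat * nat) :=
  if desig p k e then [:: (ff p k e.1, mx e); (mx e, ff p k e.2)]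
  else [:: (ff p k e.1, ff p k e.2)].

Ltac crunch :=
  unfold edge_okb, desig, cross, mx, dd, ell, absdiff, ff in *; simpl in *;
  repeat match goal with
  | |- context [if ?b then _ else _] => let Hb := fresh "Hb" in case: (boolP b) => Hb; try (exfalso; lia)
  | H : context [if ?b then _ else _] |- _ => let Hb := fresh "Hb" in move: H; case: (boolP b) => Hb H; try (exfalso; lia)
  end; try lia.

Lemma Ep_len v p k x y : 17 <= v -> 0 < k -> k <= 8 -> edge_okb v p k (x, y) ->
  [seq ell (v + k) e.1 e.2 | e <- Ep p k (x, y)] =
  if desig p k (x, y) then [:: k; k] else [:: ell v x y].
Proof.
move=> hv hk0 hk8 ok; rewrite /Ep; case: ifP => hd /=.
  crunch. all: try (congr (_ :: _ :: _); lia).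
crunch. all: try (congr (_ :: _); lia).
Qed.

Fixpoint insr p k x t : seq nat :=
  match t with
  | [::] => [::]
  | y :: t' => if desig p k (x, y) then mx (x, y) :: ff p k y :: insr p k y t'
               else ff p k y :: insr p k y t'
  end.
Definition ins p k h := if h is x :: t then ff p k x :: insr p k x t else [::].

Lemma edges_ins p k h : edges (ins p k h) = flatten (map (Ep p k) (edges h)).
Proof.
case: h => [|x t] //=; elim: t x => [|y t IH] x //=.
rewrite /Ep /=; case: ifP => hd /=.
  by rewrite -IH.
by rewrite -IH.
Qed.

Lemma ins_perm p k h :
  perm_eq (ins p k h) (map (ff p k) h ++ [seq mx e | e <- edges h & desig p k e]).
Proof.
case: h => [|x t] //=; rewrite perm_cons; elim: t x => [|y t IH] x //=.
case: ifP => hd /=.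
  apply: (@perm_trans _ [:: ff p k y, mx (x, y) & insr p k y t]).
    by rewrite -(cat1s (mx (x, y))) -(cat1s (ff p k y)) perm_catCA.
  rewrite perm_cons.
  set A := [seq ff p k i | i <- t]; set B := [seq mx e | e <- _ & _].
  have -> : A ++ mx (x, y) :: B = A ++ [:: mx (x, y)] ++ B by [].
  rewrite perm_sym perm_catCA.
  by rewrite cat1s perm_cons perm_sym; exact: IH.
by rewrite perm_cons; exact: IH.
Qed.



Ltac splitall :=
  repeat (simpl; match goal with
  | H : is_true (~~ (if ?b then _ else _)) |- _ => let Hb := fresh "Hb" in move: H; case: (boolP b) => Hb H; try (exfalso; lia)
  | H : is_true (if ?b then _ else _) |- _ => let Hb := fresh "Hb" in move: H; case: (boolP b) => Hb H; try (exfalso; lia)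
  | |- context [if ?b then _ else _] => let Hb := fresh "Hb" in case: (boolP b) => Hb; try (exfalso; lia)
  end).
Ltac fin := try (split; [lia | first [reflexivity | congr (_ :: _); lia | lia]]).

Ltac pre x y p :=
  rewrite /Ep /edge_okb /desig /cross /mx /dd /ell /absdiff /ff /=;
  let H1 := fresh "H1" in let H2 := fresh "H2" in let H3 := fresh "H3" in
  case: (boolP (x <= y)) => H1; rewrite ?H1 ?(negbTE H1) /=;
  case: (boolP (x < p)) => H2; rewrite ?H2 ?(negbTE H2) /=;
  case: (boolP (y < p)) => H3; rewrite ?H3 ?(negbTE H3) /=; try (exfalso; lia).

Lemma Ep_newcut v p k x y : 17 <= v -> 0 < k -> k <= 8 -> edge_okb v p k (x, y) ->
  all (edge_okb (v + k) (p + k) k) (Ep p k (x, y)) /\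
  [seq mx e | e <- Ep p k (x, y) & desig (p + k) k e] =
  if desig p k (x, y) then [:: mx (x, y) + k] else [::].
Proof.
move=> hv hk0 hk8; pre x y p.
all: splitall; move=> *; fin.
Qed.

Lemma Ep_lowcut v p k q kq x y : 17 <= v -> 0 < k -> k <= 8 -> 0 < kq -> kq <= 8 ->
  q + maxn kq k <= p -> edge_okb v p k (x, y) -> edge_okb v q kq (x, y) ->
  all (edge_okb (v + k) q kq) (Ep p k (x, y)) /\
  [seq mx e | e <- Ep p k (x, y) & desig q kq e] =
  if desig q kq (x, y) then [:: mx (x, y)] else [::].
Proof.
move=> hv hk0 hk8 hq0 hq8 hqp; pre x y p.
all: splitall; move=> *; fin.
Qed.


Lemma fm_flat (E : seq (nat * nat)) (P : pred (nat * nat)) (g : nat * nat -> nat) :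
  [seq g e | e <- E & P e] = flatten [seq (if P e then [:: g e] else [::]) | e <- E].
Proof. by elim: E => [|e E IH] //=; case: ifP => _ /=; rewrite IH. Qed.

Lemma filter_flat (F : nat * nat -> seq (nat * nat)) (P : pred (nat * nat)) (g : nat * nat -> nat) E :
  [seq g e | e <- flatten (map F E) & P e] =
  flatten [seq [seq g e | e <- F e0 & P e] | e0 <- E].
Proof. by elim: E => [|e E IH] //=; rewrite filter_cat map_cat IH. Qed.

Lemma all_flat (F : nat * nat -> seq (nat * nat)) (P : pred (nat * nat)) E :
  all P (flatten (map F E)) = all (fun e => all P (F e)) E.
Proof. by elim: E => [|e E IH] //=; rewrite all_cat IH. Qed.

Lemma map_flat (F : nat * nat -> seq (nat * nat)) (g : nat * nat -> nat) E :
  map g (flatten (map F E)) = flatten [seq map g (F e) | e <- E].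
Proof. by elim: E => [|e E IH] //=; rewrite map_cat IH. Qed.

Lemma perm_split (E : seq (nat * nat)) (D : pred (nat * nat)) (g : nat * nat -> nat) k :
  (forall e, e \in E -> D e -> g e = k) ->
  perm_eq (flatten [seq (if D e then [:: k; k] else [:: g e]) | e <- E])
          (map g E ++ nseq (count D E) k).
Proof.
elim: E => [|e E IH] //= H.
have IH' : perm_eq (flatten [seq (if D e then [:: k; k] else [:: g e]) | e <- E])
          (map g E ++ nseq (count D E) k).
  by apply: IH => e' he'; apply: H; rewrite inE he' orbT.
case: ifP => hd /=.
  rewrite (H e (mem_head _ _) hd) perm_cons add0n perm_sym.
  have -> : [seq g i | i <- E] ++ k :: nseq (count D E) k =
            [seq g i | i <- E] ++ [:: k] ++ nseq (count D E) k by [].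
  by rewrite perm_catCA cat1s perm_cons perm_sym.
by rewrite add0n perm_cons.
Qed.

Definition Pv v h L := perm_eq h (iota 0 v) /\ perm_eq (path_lengths v h) L.

Lemma map_ff_iota p k v : p <= v ->
  map (ff p k) (iota 0 v) = iota 0 p ++ iota (p + k) (v - p).
Proof.
move=> pv; rewrite -{1}(subnKC pv) iotaD map_cat add0n; f_equal.
  transitivity (map id (iota 0 p)); last by rewrite map_id.
  apply/eq_in_map => z; rewrite mem_iota /ff => /andP[_ hz].
  by rewrite add0n in hz; rewrite hz.
rewrite addnC iotaDl; apply/eq_in_map => z; rewrite mem_iota /ff => /andP[hz _].
by rewrite ltnNge hz /= addnC.
Qed.

Lemma desig_ell v p k e : 16 < v -> k <= 8 -> desig p k e -> ell v e.1 e.2 = k.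
Proof.
case: e => x y /= hv hk; unfold desig, cross, dd, ell, absdiff; simpl.
case: ifP => h1 /andP[_ /eqP H]; lia.
Qed.

Lemma pl_edges v h : path_lengths v h = map (fun e => ell v e.1 e.2) (edges h).
Proof. by []. Qed.

Lemma ext1 v h L p k (cs : seq (nat * nat)) :
  Pv v h L -> cutb v h p k ->
  all (fun qk => cutb v h qk.1 qk.2 && (qk.1 + maxn qk.2 k <= p)) cs ->
  [/\ Pv (v + k) (ins p k h) (L ++ nseq k k), cutb (v + k) (ins p k h) (p + k) k &
     all (fun qk => cutb (v + k) (ins p k h) qk.1 qk.2 && (qk.1 + maxn qk.2 k <= p + k)) cs].
Proof.
move=> [hp hl] hc hcs.
move/and5P: (hc) => [hv hk0 hk8 hpk /andP[hall hmax]].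
set E := edges h in hall hmax.
have hcount : count (desig p k) E = k.
  by move/perm_size: hmax; rewrite size_map size_filter size_iota.
have hpv : p <= v by lia.
split.
- split.
  + apply: (perm_trans (ins_perm p k h)).
    have h1 : perm_eq (map (ff p k) h) (iota 0 p ++ iota (p + k) (v - p)).
      by rewrite -map_ff_iota //; apply: perm_map.
    have -> : iota 0 (v + k) = iota 0 p ++ iota p k ++ iota (p + k) (v - p).
      have -> : v + k = p + (k + (v - p)) by lia.
      by rewrite !iotaD add0n.
    apply: (@perm_trans _ ((iota 0 p ++ iota (p + k) (v - p)) ++ iota p k)).
      by apply: perm_cat.
    by rewrite -catA perm_cat2l perm_catC.
  + rewrite pl_edges edges_ins map_flat.
    have -> : [seq [seq ell (v + k) e.1 e.2 | e <- Ep p k e0] | e0 <- E] =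
              [seq (if desig p k e0 then [:: k; k] else [:: ell v e0.1 e0.2]) | e0 <- E].
      apply/eq_in_map => -[x y] he; apply: Ep_len => //; exact: (allP hall _ he).
    apply: (perm_trans (perm_split (g := fun e => ell v e.1 e.2) _)).
      by move=> e _ hd; apply: desig_ell => //; lia.
    by rewrite hcount; apply: perm_cat.
- apply/and5P; split; try lia.
  apply/andP; split.
    rewrite edges_ins all_flat; apply/allP => -[x y] he.
    exact: (Ep_newcut hv hk0 hk8 (allP hall _ he)).1.
  rewrite edges_ins filter_flat.
  have -> : [seq [seq mx e | e <- Ep p k e0 & desig (p + k) k e] | e0 <- E] =
            [seq (if desig p k e0 then [:: mx e0 + k] else [::]) | e0 <- E].
    apply/eq_in_map => -[x y] he.
    exact: (Ep_newcut hv hk0 hk8 (allP hall _ he)).2.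
  rewrite -(fm_flat E (desig p k) (fun e => mx e + k)).
  have -> : [seq mx e + k | e <- E & desig p k e] =
            map (addn k) [seq mx e | e <- E & desig p k e].
    by rewrite -map_comp; apply: eq_map => e /=; rewrite addnC.
  by rewrite addnC iotaDl; apply: perm_map.
- apply/allP => -[q kq] hq; have /andP[hcq hsp] := allP hcs _ hq; simpl in *.
  apply/andP; split; last by lia.
  move/and5P: hcq => [_ hkq0 hkq8 hqk /andP[hallq hmaxq]].
  apply/and5P; split; try lia.
  apply/andP; split.
    rewrite edges_ins all_flat; apply/allP => -[x y] he.
    exact: (Ep_lowcut hv hk0 hk8 hkq0 hkq8 hsp (allP hall _ he) (allP hallq _ he)).1.
  rewrite edges_ins filter_flat.
  have -> : [seq [seq mx e | e <- Ep p k e0 & desig q kq e] | e0 <- E] =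
            [seq (if desig q kq e0 then [:: mx e0] else [::]) | e0 <- E].
    apply/eq_in_map => -[x y] he.
    exact: (Ep_lowcut hv hk0 hk8 hkq0 hkq8 hsp (allP hall _ he) (allP hallq _ he)).2.
  by rewrite -(fm_flat E (desig q kq) mx).
Qed.

Lemma extn n v h L p k (cs : seq (nat * nat)) :
  Pv v h L -> cutb v h p k ->
  all (fun qk => cutb v h qk.1 qk.2 && (qk.1 + maxn qk.2 k <= p)) cs ->
  exists h', Pv (v + n * k) h' (L ++ nseq (n * k) k) /\
             all (fun qk => cutb (v + n * k) h' qk.1 qk.2) cs.
Proof.
elim: n v h L p => [|n IH] v h L p hP hc hcs.
  exists h; rewrite mul0n addn0 cats0; split => //.
  by apply/allP => qk hq; case/andP: (allP hcs _ hq).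
case: (ext1 hP hc hcs) => hP1 hc1 hcs1.
case: (IH _ _ _ _ hP1 hc1 hcs1) => h' [hP' hcs'].
exists h'; rewrite mulSn addnA nseqD catA; split => //.
Qed.

Definition valid v h (cs : seq (nat * nat)) :=
  all (fun pk => cutb v h pk.1 pk.2) cs &&
  pairwise (fun x y => y.1 + maxn y.2 x.2 <= x.1) cs.

Lemma multi (g : nat -> nat) (cs : seq (nat * nat)) v h L :
  Pv v h L -> valid v h cs ->
  exists h', Pv (v + sumn [seq g pk.2 * pk.2 | pk <- cs]) h'
                (L ++ flatten [seq nseq (g pk.2 * pk.2) pk.2 | pk <- cs]).
Proof.
elim: cs v h L => [|[p k] cs IH] v h L hP.
  by move=> _; exists h; rewrite addn0 cats0.
rewrite /valid /= => /andP[/andP[hc hall] /andP[hsp hpw]].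
have hcs : all (fun qk => cutb v h qk.1 qk.2 && (qk.1 + maxn qk.2 k <= p)) cs.
  by apply/allP => qk hq; rewrite (allP hall _ hq) (allP hsp _ hq).
case: (extn (g k) hP hc hcs) => h1 [hP1 hall1].
have hv1 : valid (v + g k * k) h1 cs by rewrite /valid hall1 hpw.
case: (IH _ _ _ hP1 hv1) => h' hP'.
by exists h'; rewrite addnA catA.
Qed.


Definition tbl : seq (nat * nat * nat * (seq nat * seq (nat * nat))) := [::
  ((1, 1, 14), ([:: 2; 11; 10; 1; 9; 0; 8; 16; 7; 15; 6; 14; 5; 3; 12; 4; 13], [::]));
  ((1, 1, 15), ([:: 4; 14; 6; 16; 8; 0; 10; 12; 2; 1; 9; 17; 7; 15; 5; 13; 3; 11], [::]));
  ((1, 1, 16), ([:: 18; 7; 15; 16; 5; 13; 2; 10; 8; 0; 11; 3; 14; 6; 17; 9; 1; 12; 4], [::]));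
  ((1, 1, 18), ([:: 1; 9; 17; 4; 12; 14; 6; 19; 20; 7; 15; 2; 10; 18; 5; 13; 0; 8; 16; 3; 11], [:: (8, 8)]));
  ((1, 1, 19), ([:: 4; 12; 20; 6; 14; 0; 8; 16; 2; 10; 18; 19; 11; 3; 17; 9; 1; 15; 7; 5; 13; 21], [:: (9, 8)]));
  ((1, 1, 20), ([:: 1; 9; 17; 2; 3; 11; 19; 4; 12; 20; 5; 13; 21; 6; 14; 22; 7; 15; 0; 8; 16; 18; 10], [:: (13, 8)]));
  ((1, 1, 22), ([:: 0; 17; 9; 1; 2; 19; 11; 3; 20; 12; 4; 21; 13; 5; 22; 14; 6; 23; 15; 7; 24; 16; 8; 10; 18], [:: (13, 8)]));
  ((1, 1, 23), ([:: 20; 2; 10; 18; 0; 8; 16; 24; 6; 14; 22; 4; 12; 13; 5; 23; 15; 7; 25; 17; 9; 1; 19; 21; 3; 11], [:: (11, 8)]));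
  ((1, 1, 24), ([:: 21; 13; 5; 24; 22; 14; 6; 25; 17; 9; 1; 20; 12; 4; 23; 15; 7; 26; 18; 10; 2; 3; 11; 19; 0; 8; 16], [:: (13, 8)]));
  ((1, 2, 13), ([:: 0; 16; 8; 10; 2; 11; 3; 12; 4; 13; 5; 14; 6; 15; 7; 9; 1], [::]));
  ((1, 2, 14), ([:: 2; 0; 10; 12; 4; 14; 6; 16; 8; 7; 15; 5; 13; 3; 11; 1; 9; 17], [::]));
  ((1, 2, 15), ([:: 15; 4; 3; 11; 0; 8; 16; 5; 13; 2; 10; 18; 7; 9; 1; 12; 14; 6; 17], [::]));
  ((1, 2, 16), ([:: 8; 0; 12; 4; 16; 18; 6; 14; 2; 10; 11; 3; 15; 7; 19; 17; 9; 1; 13; 5], [::]));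
  ((1, 2, 17), ([:: 20; 18; 10; 2; 15; 7; 5; 13; 0; 8; 16; 3; 11; 12; 4; 17; 9; 1; 14; 6; 19], [:: (8, 8)]));
  ((1, 2, 18), ([:: 7; 15; 13; 5; 19; 11; 3; 17; 9; 1; 21; 20; 6; 14; 0; 8; 16; 2; 10; 18; 4; 12], [:: (11, 8)]));
  ((1, 2, 19), ([:: 6; 14; 12; 4; 19; 11; 3; 18; 10; 2; 17; 9; 1; 16; 8; 0; 15; 7; 22; 20; 21; 13; 5], [:: (11, 8)]));
  ((1, 2, 21), ([:: 19; 2; 0; 17; 9; 1; 18; 10; 8; 16; 24; 7; 15; 23; 6; 14; 22; 5; 13; 21; 4; 12; 11; 3; 20], [:: (11, 8)]));
  ((1, 2, 22), ([:: 3; 11; 19; 17; 9; 1; 25; 7; 15; 23; 5; 13; 21; 20; 2; 10; 18; 0; 8; 16; 24; 6; 14; 22; 4; 12], [:: (11, 8)]));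
  ((1, 2, 23), ([:: 12; 4; 2; 10; 18; 26; 7; 15; 23; 25; 6; 14; 22; 3; 11; 19; 0; 8; 16; 24; 5; 13; 21; 20; 1; 9; 17], [:: (10, 8)]));
  ((1, 2, 24), ([:: 14; 6; 26; 18; 10; 2; 22; 20; 12; 4; 24; 16; 8; 0; 27; 7; 15; 23; 3; 11; 19; 21; 1; 9; 17; 25; 5; 13], [:: (11, 8)]));
  ((1, 3, 12), ([:: 7; 15; 14; 6; 4; 12; 3; 5; 13; 11; 2; 10; 1; 9; 0; 8; 16], [::]));
  ((1, 3, 13), ([:: 11; 1; 3; 5; 13; 15; 7; 17; 9; 8; 16; 6; 14; 4; 12; 2; 10; 0], [::]));
  ((1, 3, 14), ([:: 13; 2; 4; 15; 17; 6; 14; 3; 11; 0; 8; 16; 5; 7; 18; 10; 9; 1; 12], [::]));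
  ((1, 3, 15), ([:: 3; 1; 9; 17; 5; 13; 15; 7; 19; 11; 10; 2; 14; 6; 18; 0; 12; 4; 16; 8], [::]));
  ((1, 3, 16), ([:: 3; 11; 13; 5; 7; 15; 2; 10; 18; 16; 8; 0; 20; 12; 4; 17; 9; 1; 14; 6; 19], [::]));
  ((1, 3, 17), ([:: 19; 11; 3; 5; 13; 21; 7; 15; 17; 9; 1; 0; 8; 16; 2; 10; 18; 4; 12; 14; 6; 20], [:: (10, 8)]));
  ((1, 3, 18), ([:: 16; 8; 6; 14; 15; 7; 22; 1; 9; 17; 2; 10; 18; 3; 11; 19; 4; 12; 20; 5; 13; 21; 0], [:: (12, 8)]));
  ((1, 3, 20), ([:: 13; 5; 3; 11; 10; 2; 19; 21; 4; 12; 20; 18; 1; 9; 17; 0; 8; 16; 24; 7; 15; 23; 6; 14; 22], [:: (8, 8)]));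
  ((1, 3, 21), ([:: 24; 16; 8; 10; 18; 0; 2; 20; 12; 4; 6; 14; 22; 21; 3; 11; 19; 1; 9; 17; 25; 7; 15; 23; 5; 13], [:: (11, 8)]));
  ((1, 3, 22), ([:: 21; 19; 18; 10; 2; 0; 8; 16; 24; 5; 13; 11; 3; 22; 14; 6; 25; 17; 9; 1; 20; 12; 4; 23; 15; 7; 26], [:: (11, 8)]));
  ((1, 3, 23), ([:: 1; 3; 11; 19; 27; 7; 15; 23; 21; 13; 5; 25; 17; 9; 8; 16; 24; 4; 12; 20; 0; 26; 18; 10; 2; 22; 14; 6], [:: (14, 8)]));
  ((1, 3, 24), ([:: 28; 26; 25; 17; 9; 1; 22; 14; 6; 27; 19; 11; 3; 24; 16; 8; 0; 21; 13; 5; 7; 15; 23; 2; 10; 18; 20; 12; 4], [:: (11, 8)]));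
  ((1, 4, 11), ([:: 13; 4; 6; 14; 12; 3; 5; 7; 15; 16; 8; 0; 9; 1; 10; 2; 11], [::]));
  ((1, 4, 12), ([:: 2; 4; 6; 14; 16; 8; 0; 10; 12; 13; 3; 11; 1; 9; 17; 7; 15; 5], [::]));
  ((1, 4, 13), ([:: 8; 0; 2; 1; 9; 17; 6; 14; 3; 11; 13; 5; 16; 18; 10; 12; 4; 15; 7], [::]));
  ((1, 4, 14), ([:: 4; 12; 0; 8; 6; 18; 10; 2; 14; 16; 15; 17; 9; 1; 13; 5; 3; 11; 19; 7], [::]));
  ((1, 4, 15), ([:: 6; 19; 18; 5; 13; 0; 8; 10; 2; 4; 12; 20; 7; 15; 17; 9; 1; 14; 16; 3; 11], [::]));
  ((1, 4, 16), ([:: 2; 0; 14; 12; 20; 6; 4; 18; 10; 8; 16; 17; 9; 1; 15; 7; 21; 13; 5; 19; 11; 3], [::]));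
  ((1, 4, 17), ([:: 22; 20; 12; 10; 18; 3; 11; 19; 4; 2; 17; 9; 1; 16; 8; 0; 15; 7; 5; 13; 14; 6; 21], [:: (13, 8)]));
  ((1, 4, 19), ([:: 20; 18; 10; 2; 19; 11; 3; 1; 24; 16; 8; 0; 17; 9; 7; 15; 23; 6; 14; 22; 5; 13; 12; 4; 21], [:: (12, 8)]));
  ((1, 4, 20), ([:: 7; 15; 13; 5; 3; 11; 19; 1; 9; 17; 25; 23; 21; 22; 4; 12; 20; 2; 10; 18; 0; 8; 16; 24; 6; 14], [:: (8, 8)]));
  ((1, 4, 21), ([:: 26; 25; 6; 14; 22; 24; 5; 13; 21; 2; 10; 18; 16; 8; 0; 19; 11; 3; 1; 20; 12; 4; 23; 15; 7; 9; 17], [:: (13, 8)]));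
  ((1, 4, 22), ([:: 14; 6; 4; 12; 20; 0; 8; 16; 24; 22; 2; 10; 18; 26; 25; 23; 3; 11; 19; 27; 7; 15; 17; 9; 1; 21; 13; 5], [:: (8, 8)]));
  ((1, 4, 23), ([:: 22; 24; 3; 11; 19; 27; 6; 14; 16; 8; 0; 2; 10; 18; 26; 5; 13; 21; 20; 12; 4; 25; 17; 9; 1; 28; 7; 15; 23], [:: (11, 8)]));
  ((1, 4, 24), ([:: 26; 18; 10; 2; 4; 12; 20; 28; 0; 22; 24; 16; 8; 6; 14; 13; 5; 27; 19; 11; 3; 25; 17; 9; 1; 23; 15; 7; 29; 21], [:: (12, 8)]));
  ((1, 5, 10), ([:: 8; 6; 14; 16; 15; 0; 9; 7; 5; 13; 4; 12; 3; 11; 2; 10; 1], [::]));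
  ((1, 5, 11), ([:: 5; 3; 1; 11; 13; 15; 7; 9; 17; 0; 8; 16; 6; 14; 4; 12; 2; 10], [::]));
  ((1, 5, 12), ([:: 18; 10; 11; 9; 17; 0; 2; 13; 5; 16; 8; 6; 14; 3; 1; 12; 4; 15; 7], [::]));
  ((1, 5, 13), ([:: 1; 13; 11; 9; 17; 19; 7; 15; 3; 5; 6; 14; 2; 10; 18; 0; 8; 16; 4; 12], [::]));
  ((1, 5, 14), ([:: 20; 7; 5; 6; 14; 1; 9; 17; 19; 11; 3; 16; 8; 0; 13; 15; 2; 4; 12; 10; 18], [::]));
  ((1, 5, 15), ([:: 20; 18; 16; 8; 6; 14; 0; 2; 10; 12; 4; 3; 17; 9; 1; 15; 7; 21; 13; 5; 19; 11], [::]));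
  ((1, 5, 16), ([:: 7; 22; 20; 21; 13; 5; 3; 18; 10; 2; 17; 15; 0; 8; 16; 1; 9; 11; 19; 4; 12; 14; 6], [::]));
  ((1, 5, 18), ([:: 13; 5; 22; 21; 19; 17; 0; 8; 16; 24; 7; 15; 23; 6; 14; 12; 4; 2; 10; 18; 1; 9; 11; 3; 20], [:: (9, 8)]));
  ((1, 5, 19), ([:: 25; 7; 15; 13; 5; 23; 21; 19; 11; 3; 1; 9; 17; 18; 10; 2; 0; 8; 16; 24; 6; 14; 22; 4; 12; 20], [:: (8, 8)]));
  ((1, 5, 20), ([:: 12; 4; 2; 21; 19; 0; 8; 16; 14; 6; 25; 17; 9; 1; 20; 22; 3; 11; 13; 5; 24; 23; 15; 7; 26; 18; 10], [:: (11, 8)]));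
  ((1, 5, 21), ([:: 9; 17; 25; 27; 19; 11; 3; 1; 21; 13; 5; 7; 15; 23; 22; 20; 12; 4; 24; 16; 8; 0; 2; 10; 18; 26; 6; 14], [:: (14, 8)]));
  ((1, 5, 22), ([:: 2; 10; 18; 16; 8; 0; 21; 13; 11; 19; 27; 6; 14; 22; 20; 12; 4; 25; 17; 9; 1; 28; 7; 15; 23; 24; 3; 5; 26], [:: (14, 8)]));
  ((1, 5, 23), ([:: 11; 3; 25; 23; 21; 13; 5; 27; 19; 17; 15; 7; 29; 1; 9; 10; 2; 24; 16; 8; 0; 22; 14; 6; 28; 20; 12; 4; 26; 18], [:: (8, 8)]));
  ((1, 5, 24), ([:: 8; 16; 17; 9; 1; 24; 26; 3; 11; 19; 27; 25; 2; 10; 18; 20; 28; 5; 13; 21; 29; 0; 23; 15; 7; 30; 22; 14; 6; 4; 12], [:: (10, 8)]));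
  ((2, 1, 13), ([:: 13; 11; 3; 12; 4; 5; 14; 6; 15; 7; 16; 8; 0; 9; 1; 2; 10], [::]));
  ((2, 1, 14), ([:: 2; 12; 10; 0; 1; 11; 3; 13; 5; 15; 7; 17; 9; 8; 16; 6; 14; 4], [::]));
  ((2, 1, 15), ([:: 10; 9; 1; 12; 4; 15; 7; 18; 17; 6; 14; 3; 11; 0; 2; 13; 5; 16; 8], [::]));
  ((2, 1, 16), ([:: 14; 6; 18; 10; 2; 1; 9; 17; 5; 13; 11; 19; 7; 15; 3; 4; 12; 0; 8; 16], [::]));
  ((2, 1, 17), ([:: 0; 20; 7; 15; 2; 10; 18; 5; 13; 12; 4; 17; 9; 1; 14; 6; 8; 16; 3; 11; 19], [:: (12, 8)]));
  ((2, 1, 18), ([:: 20; 12; 4; 2; 10; 18; 19; 11; 3; 17; 9; 1; 15; 7; 21; 13; 5; 6; 14; 0; 8; 16], [:: (9, 8)]));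
  ((2, 1, 19), ([:: 18; 17; 2; 10; 9; 1; 16; 8; 0; 15; 7; 22; 14; 6; 21; 13; 5; 3; 11; 19; 4; 12; 20], [:: (8, 8)]));
  ((2, 1, 21), ([:: 19; 20; 3; 11; 12; 4; 2; 10; 18; 1; 9; 17; 0; 8; 16; 24; 7; 15; 23; 6; 14; 22; 5; 13; 21], [:: (11, 8)]));
  ((2, 1, 22), ([:: 8; 16; 15; 7; 25; 17; 9; 1; 19; 11; 3; 21; 13; 5; 23; 24; 0; 18; 10; 2; 20; 12; 4; 22; 14; 6], [:: (9, 8)]));
  ((2, 1, 23), ([:: 11; 19; 18; 10; 2; 21; 13; 5; 3; 22; 14; 6; 25; 17; 9; 1; 20; 12; 4; 23; 15; 7; 26; 0; 8; 16; 24], [:: (13, 8)]));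
  ((2, 1, 24), ([:: 9; 17; 25; 5; 13; 21; 1; 2; 22; 14; 6; 26; 18; 10; 8; 16; 24; 4; 12; 20; 0; 27; 19; 11; 3; 23; 15; 7], [:: (11, 8)]));
  ((2, 2, 12), ([:: 12; 13; 4; 6; 14; 5; 3; 11; 2; 10; 1; 9; 0; 8; 16; 15; 7], [::]));
  ((2, 2, 13), ([:: 7; 5; 13; 15; 14; 6; 16; 8; 0; 10; 2; 12; 4; 3; 11; 1; 9; 17], [::]));
  ((2, 2, 14), ([:: 11; 10; 18; 1; 12; 4; 15; 7; 9; 17; 6; 14; 3; 2; 13; 5; 16; 8; 0], [::]));
  ((2, 2, 15), ([:: 16; 4; 5; 17; 9; 1; 13; 15; 3; 11; 19; 7; 8; 0; 12; 14; 6; 18; 10; 2], [::]));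
  ((2, 2, 16), ([:: 1; 2; 15; 14; 6; 19; 11; 3; 16; 8; 0; 13; 5; 18; 10; 12; 4; 17; 9; 7; 20], [::]));
  ((2, 2, 17), ([:: 7; 15; 1; 2; 10; 18; 4; 12; 20; 6; 14; 16; 8; 0; 21; 13; 5; 19; 11; 9; 17; 3], [:: (13, 8)]));
  ((2, 2, 18), ([:: 12; 4; 19; 11; 3; 18; 10; 8; 16; 1; 2; 17; 9; 7; 15; 0; 22; 14; 6; 21; 13; 5; 20], [:: (12, 8)]));
  ((2, 2, 20), ([:: 8; 16; 14; 6; 7; 15; 23; 24; 22; 5; 13; 21; 4; 12; 20; 3; 11; 19; 2; 10; 18; 1; 9; 17; 0], [:: (12, 8)]));
  ((2, 2, 21), ([:: 1; 9; 17; 15; 7; 8; 16; 24; 6; 14; 22; 4; 12; 20; 2; 10; 18; 0; 25; 23; 5; 13; 21; 3; 11; 19], [:: (9, 8)]));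
  ((2, 2, 22), ([:: 24; 23; 15; 7; 26; 25; 17; 9; 1; 20; 12; 4; 6; 14; 22; 3; 11; 19; 0; 8; 16; 18; 10; 2; 21; 13; 5], [:: (11, 8)]));
  ((2, 2, 23), ([:: 17; 9; 8; 16; 24; 4; 12; 20; 0; 2; 22; 14; 6; 26; 18; 10; 11; 19; 27; 7; 15; 23; 3; 1; 21; 13; 5; 25], [:: (14, 8)]));
  ((2, 2, 24), ([:: 8; 16; 18; 10; 9; 17; 25; 4; 12; 20; 28; 7; 15; 23; 2; 1; 22; 14; 6; 27; 19; 11; 3; 24; 26; 5; 13; 21; 0], [:: (11, 8)]));
  ((2, 3, 11), ([:: 3; 1; 2; 11; 10; 12; 4; 13; 5; 14; 6; 15; 7; 9; 0; 8; 16], [::]));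
  ((2, 3, 12), ([:: 16; 14; 13; 5; 15; 7; 17; 9; 1; 11; 3; 4; 6; 8; 0; 10; 2; 12], [::]));
  ((2, 3, 13), ([:: 14; 16; 15; 7; 18; 10; 2; 13; 5; 4; 12; 1; 3; 11; 0; 8; 6; 17; 9], [::]));
  ((2, 3, 14), ([:: 6; 14; 15; 13; 5; 17; 9; 1; 3; 11; 19; 7; 8; 16; 4; 12; 0; 2; 10; 18], [::]));
  ((2, 3, 15), ([:: 1; 20; 19; 11; 9; 17; 4; 12; 14; 6; 7; 15; 2; 10; 18; 5; 13; 0; 8; 16; 3], [::]));
  ((2, 3, 16), ([:: 15; 17; 3; 11; 9; 1; 0; 14; 6; 20; 12; 4; 18; 10; 2; 16; 8; 7; 21; 19; 5; 13], [::]));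
  ((2, 3, 17), ([:: 12; 4; 19; 11; 10; 18; 20; 5; 13; 15; 7; 22; 14; 6; 21; 0; 8; 16; 1; 9; 17; 2; 3], [:: (12, 8)]));
  ((2, 3, 19), ([:: 1; 9; 11; 3; 2; 10; 18; 20; 19; 17; 0; 8; 16; 24; 7; 15; 23; 6; 14; 22; 5; 13; 21; 4; 12], [:: (9, 8)]));
  ((2, 3, 20), ([:: 23; 24; 22; 4; 12; 20; 2; 10; 18; 0; 8; 16; 14; 6; 5; 13; 21; 3; 11; 19; 1; 9; 17; 15; 7; 25], [:: (14, 8)]));
  ((2, 3, 21), ([:: 19; 0; 1; 9; 17; 25; 24; 16; 8; 6; 14; 22; 20; 12; 4; 23; 15; 7; 26; 18; 10; 2; 21; 13; 5; 3; 11], [:: (9, 8)]));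
  ((2, 3, 22), ([:: 22; 20; 0; 8; 16; 14; 6; 26; 18; 10; 2; 3; 11; 19; 27; 7; 15; 23; 21; 1; 9; 17; 25; 5; 13; 12; 4; 24], [:: (12, 8)]));
  ((2, 3, 23), ([:: 28; 26; 25; 17; 9; 7; 15; 23; 2; 10; 18; 20; 12; 4; 5; 13; 21; 0; 8; 16; 24; 3; 11; 19; 27; 6; 14; 22; 1], [:: (11, 8)]));
  ((2, 3, 24), ([:: 20; 22; 21; 13; 5; 27; 19; 11; 3; 25; 17; 9; 1; 23; 15; 7; 29; 0; 28; 6; 14; 12; 4; 26; 18; 10; 2; 24; 16; 8], [:: (12, 8)]));
  ((2, 4, 10), ([:: 7; 15; 13; 14; 12; 4; 6; 5; 3; 11; 2; 10; 1; 9; 0; 8; 16], [::]));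
  ((2, 4, 11), ([:: 8; 9; 7; 17; 1; 3; 11; 13; 5; 15; 16; 6; 14; 4; 12; 2; 10; 0], [::]));
  ((2, 4, 12), ([:: 7; 18; 0; 1; 12; 10; 2; 13; 5; 16; 8; 6; 14; 3; 11; 9; 17; 15; 4], [::]));
  ((2, 4, 13), ([:: 15; 7; 8; 10; 2; 0; 12; 4; 16; 18; 6; 14; 13; 5; 17; 9; 1; 19; 11; 3], [::]));
  ((2, 4, 14), ([:: 14; 1; 0; 2; 10; 9; 17; 4; 12; 20; 7; 15; 13; 5; 18; 16; 8; 6; 19; 11; 3], [::]));
  ((2, 4, 15), ([:: 13; 11; 12; 10; 18; 4; 2; 16; 8; 0; 14; 6; 20; 19; 5; 3; 17; 9; 1; 15; 7; 21], [::]));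
  ((2, 4, 16), ([:: 20; 22; 0; 15; 13; 5; 7; 8; 16; 1; 9; 17; 2; 10; 18; 3; 11; 19; 4; 12; 14; 6; 21], [::]));
  ((2, 4, 18), ([:: 14; 6; 7; 15; 13; 5; 3; 11; 19; 2; 10; 18; 1; 9; 17; 0; 8; 16; 24; 23; 21; 4; 12; 20; 22], [:: (8, 8)]));
  ((2, 4, 19), ([:: 9; 17; 18; 10; 2; 20; 12; 4; 6; 14; 22; 24; 0; 8; 16; 15; 7; 25; 23; 5; 13; 21; 3; 11; 19; 1], [:: (10, 8)]));
  ((2, 4, 20), ([:: 14; 6; 25; 17; 9; 11; 19; 21; 23; 4; 12; 20; 1; 0; 8; 16; 24; 5; 13; 15; 7; 26; 18; 10; 2; 3; 22], [:: (13, 8)]));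
  ((2, 4, 21), ([:: 22; 20; 0; 8; 16; 24; 26; 18; 10; 2; 3; 11; 19; 27; 7; 15; 23; 25; 17; 9; 1; 21; 13; 5; 6; 14; 12; 4], [:: (10, 8)]));
  ((2, 4, 22), ([:: 13; 5; 4; 12; 14; 6; 27; 25; 26; 18; 10; 2; 23; 15; 7; 28; 20; 22; 1; 9; 17; 19; 11; 3; 24; 16; 8; 0; 21], [:: (8, 8)]));
  ((2, 4, 23), ([:: 15; 7; 5; 13; 21; 20; 12; 4; 2; 10; 18; 26; 28; 6; 14; 22; 0; 8; 16; 24; 23; 1; 9; 17; 25; 3; 11; 19; 27; 29], [:: (13, 8)]));
  ((2, 4, 24), ([:: 1; 24; 25; 2; 10; 18; 26; 28; 20; 12; 4; 27; 19; 11; 3; 5; 13; 21; 29; 6; 14; 16; 8; 0; 23; 22; 30; 7; 15; 17; 9], [:: (14, 8)]));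
  ((3, 1, 12), ([:: 8; 6; 7; 15; 14; 5; 13; 4; 12; 3; 11; 2; 10; 1; 9; 0; 16], [::]));
  ((3, 1, 13), ([:: 11; 3; 2; 12; 4; 14; 13; 5; 15; 7; 17; 1; 9; 10; 0; 8; 16; 6], [::]));
  ((3, 1, 14), ([:: 7; 15; 17; 9; 1; 12; 4; 3; 11; 0; 8; 16; 5; 6; 14; 13; 2; 10; 18], [::]));
  ((3, 1, 15), ([:: 6; 18; 19; 11; 3; 15; 7; 8; 0; 12; 4; 16; 14; 2; 10; 9; 17; 5; 13; 1], [::]));
  ((3, 1, 16), ([:: 2; 3; 4; 12; 20; 7; 15; 17; 9; 1; 14; 6; 19; 11; 10; 18; 5; 13; 0; 8; 16], [::]));
  ((3, 1, 17), ([:: 21; 20; 12; 4; 18; 10; 2; 16; 8; 7; 15; 13; 5; 19; 11; 3; 17; 9; 1; 0; 14; 6], [:: (13, 8)]));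
  ((3, 1, 18), ([:: 15; 7; 8; 16; 14; 6; 21; 13; 5; 20; 12; 4; 19; 11; 3; 18; 10; 2; 17; 9; 1; 0; 22], [:: (9, 8)]));
  ((3, 1, 20), ([:: 5; 13; 15; 7; 6; 14; 22; 23; 24; 16; 8; 0; 17; 9; 1; 18; 10; 2; 19; 11; 3; 20; 12; 4; 21], [:: (11, 8)]));
  ((3, 1, 21), ([:: 6; 14; 15; 7; 25; 17; 9; 1; 0; 8; 16; 24; 22; 4; 12; 20; 2; 10; 18; 19; 11; 3; 21; 13; 5; 23], [:: (11, 8)]));
  ((3, 1, 22), ([:: 4; 12; 20; 1; 0; 8; 16; 24; 5; 13; 21; 19; 11; 3; 2; 10; 18; 26; 7; 15; 23; 22; 14; 6; 25; 17; 9], [:: (12, 8)]));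
  ((3, 1, 23), ([:: 25; 24; 4; 12; 20; 0; 8; 16; 17; 9; 1; 21; 13; 5; 7; 15; 23; 3; 11; 19; 27; 26; 6; 14; 22; 2; 10; 18], [:: (9, 8)]));
  ((3, 1, 24), ([:: 17; 9; 10; 18; 16; 8; 0; 21; 13; 5; 26; 25; 4; 12; 20; 28; 7; 15; 23; 2; 1; 22; 14; 6; 27; 19; 11; 3; 24], [:: (14, 8)]));
  ((3, 2, 11), ([:: 13; 14; 5; 3; 11; 10; 2; 1; 9; 0; 8; 16; 7; 15; 6; 4; 12], [::]));
  ((3, 2, 12), ([:: 5; 6; 16; 17; 15; 7; 9; 1; 11; 3; 13; 14; 4; 12; 2; 10; 0; 8], [::]));
  ((3, 2, 13), ([:: 1; 9; 17; 18; 7; 5; 6; 14; 3; 11; 0; 8; 16; 15; 4; 12; 10; 2; 13], [::]));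
  ((3, 2, 14), ([:: 8; 9; 1; 0; 12; 4; 16; 14; 6; 18; 10; 2; 3; 11; 19; 7; 15; 13; 5; 17], [::]));
  ((3, 2, 15), ([:: 18; 20; 7; 5; 6; 19; 11; 3; 16; 8; 0; 13; 12; 4; 17; 9; 1; 14; 15; 2; 10], [::]));
  ((3, 2, 16), ([:: 7; 8; 10; 18; 4; 2; 16; 15; 1; 9; 17; 3; 11; 19; 5; 13; 21; 0; 14; 6; 20; 12], [::]));
  ((3, 2, 17), ([:: 20; 12; 4; 19; 17; 9; 1; 2; 10; 11; 3; 18; 16; 8; 0; 15; 7; 22; 14; 6; 5; 13; 21], [:: (10, 8)]));
  ((3, 2, 19), ([:: 5; 13; 14; 6; 4; 12; 20; 3; 11; 19; 21; 22; 23; 15; 7; 24; 16; 8; 0; 17; 9; 1; 18; 10; 2], [:: (9, 8)]));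
  ((3, 2, 20), ([:: 18; 10; 11; 19; 17; 9; 1; 25; 0; 8; 16; 24; 6; 14; 22; 4; 12; 20; 2; 3; 21; 13; 5; 23; 15; 7], [:: (12, 8)]));
  ((3, 2, 21), ([:: 14; 6; 7; 15; 23; 4; 12; 10; 2; 21; 13; 5; 24; 16; 8; 0; 26; 18; 19; 11; 3; 22; 20; 1; 9; 17; 25], [:: (8, 8)]));
  ((3, 2, 22), ([:: 26; 0; 8; 16; 15; 7; 27; 19; 11; 3; 23; 24; 4; 12; 20; 18; 10; 2; 22; 14; 6; 5; 13; 21; 1; 9; 17; 25], [:: (8, 8)]));
  ((3, 2, 23), ([:: 19; 11; 10; 18; 17; 9; 1; 22; 14; 6; 27; 25; 4; 12; 20; 28; 7; 15; 23; 2; 3; 24; 26; 5; 13; 21; 0; 8; 16], [:: (13, 8)]));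
  ((3, 2, 24), ([:: 16; 8; 6; 14; 13; 5; 27; 19; 11; 3; 25; 17; 9; 1; 23; 24; 2; 10; 18; 26; 4; 12; 20; 28; 0; 22; 21; 29; 7; 15], [:: (9, 8)]));
  ((3, 3, 10), ([:: 10; 1; 9; 0; 16; 8; 6; 15; 7; 5; 14; 12; 13; 4; 3; 11; 2], [::]));
  ((3, 3, 11), ([:: 12; 4; 5; 6; 14; 16; 8; 0; 10; 2; 1; 11; 3; 13; 15; 7; 9; 17], [::]));
  ((3, 3, 12), ([:: 15; 17; 18; 7; 6; 8; 0; 11; 3; 14; 16; 5; 13; 2; 10; 9; 1; 12; 4], [::]));
  ((3, 3, 13), ([:: 19; 0; 8; 9; 17; 5; 7; 15; 3; 11; 13; 1; 2; 14; 6; 18; 10; 12; 4; 16], [::]));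
  ((3, 3, 14), ([:: 12; 4; 3; 2; 10; 11; 19; 6; 14; 1; 9; 17; 15; 7; 20; 18; 16; 8; 0; 13; 5], [::]));
  ((3, 3, 15), ([:: 10; 8; 16; 15; 1; 9; 7; 21; 13; 5; 19; 11; 3; 2; 0; 14; 6; 20; 12; 4; 18; 17], [::]));
  ((3, 3, 16), ([:: 13; 21; 20; 18; 19; 11; 3; 5; 4; 12; 10; 2; 17; 9; 1; 16; 8; 0; 15; 7; 22; 14; 6], [::]));
  ((3, 3, 18), ([:: 3; 11; 12; 4; 21; 13; 5; 22; 14; 6; 23; 0; 8; 10; 2; 19; 20; 18; 1; 9; 17; 16; 24; 7; 15], [:: (8, 8)]));
  ((3, 3, 19), ([:: 17; 9; 8; 16; 15; 7; 5; 13; 21; 3; 11; 19; 1; 25; 23; 24; 6; 14; 22; 4; 12; 20; 2; 10; 18; 0], [:: (11, 8)]));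
  ((3, 3, 20), ([:: 22; 21; 2; 10; 9; 1; 3; 11; 19; 0; 8; 16; 24; 5; 13; 14; 6; 25; 17; 15; 7; 26; 18; 20; 12; 4; 23], [:: (9, 8)]));
  ((3, 3, 21), ([:: 18; 10; 2; 4; 12; 13; 5; 7; 15; 23; 3; 11; 19; 27; 26; 6; 14; 22; 24; 16; 8; 0; 20; 21; 1; 9; 17; 25], [:: (9, 8)]));
  ((3, 3, 22), ([:: 25; 23; 22; 21; 0; 8; 16; 24; 3; 11; 19; 27; 6; 14; 13; 5; 26; 18; 10; 2; 4; 12; 20; 28; 7; 15; 17; 9; 1], [:: (9, 8)]));
  ((3, 3, 23), ([:: 11; 19; 20; 21; 13; 5; 27; 29; 7; 15; 23; 1; 9; 17; 25; 3; 4; 12; 14; 6; 28; 26; 18; 10; 2; 24; 16; 8; 0; 22], [:: (12, 8)]));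
  ((3, 3, 24), ([:: 27; 25; 26; 28; 20; 12; 4; 5; 13; 21; 29; 6; 14; 22; 30; 7; 15; 23; 0; 8; 16; 24; 1; 9; 17; 19; 11; 3; 2; 10; 18], [:: (8, 8)]));
  ((4, 1, 11), ([:: 1; 2; 11; 10; 8; 9; 0; 16; 7; 15; 6; 14; 5; 13; 4; 12; 3], [::]));
  ((4, 1, 12), ([:: 4; 3; 11; 13; 5; 15; 14; 6; 16; 8; 7; 17; 9; 1; 0; 10; 2; 12], [::]));
  ((4, 1, 13), ([:: 11; 12; 14; 3; 4; 15; 7; 6; 17; 9; 1; 0; 8; 16; 5; 13; 2; 10; 18], [::]));
  ((4, 1, 14), ([:: 3; 11; 19; 1; 2; 10; 18; 6; 14; 13; 5; 17; 9; 8; 0; 12; 4; 16; 15; 7], [::]));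
  ((4, 1, 15), ([:: 7; 5; 13; 0; 1; 9; 8; 16; 3; 11; 19; 6; 14; 15; 2; 10; 18; 17; 4; 12; 20], [::]));
  ((4, 1, 16), ([:: 9; 8; 6; 20; 12; 4; 18; 10; 2; 16; 17; 3; 11; 19; 5; 13; 21; 7; 15; 14; 0; 1], [::]));
  ((4, 1, 17), ([:: 9; 1; 3; 11; 19; 20; 12; 4; 5; 13; 21; 6; 14; 22; 7; 15; 0; 8; 16; 17; 18; 10; 2], [:: (9, 8)]));
  ((4, 1, 19), ([:: 3; 11; 19; 20; 21; 4; 12; 13; 5; 22; 14; 6; 23; 15; 7; 24; 16; 8; 0; 2; 10; 18; 17; 9; 1], [:: (11, 8)]));
  ((4, 1, 20), ([:: 15; 7; 8; 16; 24; 23; 22; 14; 6; 4; 12; 20; 2; 10; 18; 0; 25; 17; 9; 1; 19; 11; 3; 21; 13; 5], [:: (13, 8)]));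
  ((4, 1, 21), ([:: 19; 11; 10; 18; 20; 12; 4; 23; 15; 7; 26; 0; 1; 9; 17; 25; 6; 14; 22; 3; 2; 21; 13; 5; 24; 16; 8], [:: (12, 8)]));
  ((4, 1, 22), ([:: 7; 15; 23; 22; 20; 12; 4; 24; 16; 8; 0; 27; 19; 11; 3; 2; 10; 18; 26; 6; 14; 13; 5; 25; 17; 9; 1; 21], [:: (8, 8)]));
  ((4, 1, 23), ([:: 10; 2; 1; 9; 17; 25; 24; 16; 8; 0; 21; 13; 5; 26; 18; 20; 28; 7; 15; 23; 22; 14; 6; 27; 19; 11; 3; 4; 12], [:: (9, 8)]));
  ((4, 1, 24), ([:: 25; 17; 9; 1; 23; 21; 13; 5; 6; 14; 22; 0; 8; 16; 24; 2; 10; 18; 26; 27; 19; 11; 3; 4; 12; 20; 28; 29; 7; 15], [:: (10, 8)]));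
  ((4, 2, 10), ([:: 0; 9; 1; 2; 3; 12; 11; 10; 8; 16; 7; 15; 6; 4; 13; 5; 14], [::]));
  ((4, 2, 11), ([:: 6; 5; 15; 16; 0; 10; 8; 7; 17; 9; 1; 11; 3; 13; 14; 4; 12; 2], [::]));
  ((4, 2, 12), ([:: 5; 13; 14; 12; 1; 0; 11; 3; 2; 10; 18; 7; 15; 4; 6; 17; 9; 8; 16], [::]));
  ((4, 2, 13), ([:: 3; 1; 13; 12; 4; 5; 17; 9; 10; 2; 14; 6; 18; 0; 8; 16; 15; 7; 19; 11], [::]));
  ((4, 2, 14), ([:: 0; 1; 14; 12; 4; 17; 9; 8; 16; 3; 11; 13; 5; 18; 10; 2; 15; 7; 6; 19; 20], [::]));
  ((4, 2, 15), ([:: 10; 18; 20; 21; 13; 5; 19; 17; 9; 1; 15; 7; 6; 14; 0; 8; 16; 2; 3; 11; 12; 4], [::]));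
  ((4, 2, 16), ([:: 2; 0; 15; 7; 8; 6; 14; 22; 21; 13; 5; 20; 12; 4; 19; 11; 3; 18; 10; 9; 1; 16; 17], [::]));
  ((4, 2, 18), ([:: 2; 10; 18; 16; 8; 0; 24; 23; 15; 7; 6; 14; 22; 5; 13; 21; 4; 12; 20; 19; 11; 3; 1; 9; 17], [:: (13, 8)]));
  ((4, 2, 19), ([:: 19; 1; 9; 10; 2; 0; 8; 16; 15; 7; 25; 17; 18; 20; 12; 4; 22; 14; 6; 24; 23; 5; 13; 21; 3; 11], [:: (8, 8)]));
  ((4, 2, 20), ([:: 2; 4; 12; 13; 5; 6; 14; 22; 3; 11; 19; 0; 8; 16; 24; 25; 17; 9; 1; 20; 21; 23; 15; 7; 26; 18; 10], [:: (12, 8)]));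
  ((4, 2, 21), ([:: 1; 9; 10; 2; 22; 23; 3; 11; 19; 27; 7; 15; 17; 18; 26; 6; 14; 16; 8; 0; 20; 12; 4; 24; 25; 5; 13; 21], [:: (8, 8)]));
  ((4, 2, 22), ([:: 28; 26; 5; 13; 21; 20; 19; 27; 0; 8; 16; 24; 3; 11; 12; 4; 25; 17; 9; 1; 22; 14; 6; 7; 15; 23; 2; 10; 18], [:: (10, 8)]));
  ((4, 2, 23), ([:: 28; 27; 29; 0; 8; 16; 24; 2; 10; 18; 26; 4; 12; 20; 19; 11; 3; 25; 17; 9; 1; 23; 15; 7; 5; 13; 21; 22; 14; 6], [:: (11, 8)]));
  ((4, 2, 24), ([:: 6; 14; 22; 23; 25; 17; 9; 1; 24; 26; 18; 10; 2; 3; 11; 19; 27; 4; 12; 20; 28; 5; 13; 21; 29; 30; 7; 15; 16; 8; 0], [:: (13, 8)]));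
  ((5, 1, 10), ([:: 11; 10; 2; 4; 3; 12; 13; 5; 6; 14; 15; 7; 16; 8; 0; 9; 1], [::]));
  ((5, 1, 11), ([:: 16; 0; 10; 2; 1; 11; 3; 13; 12; 4; 14; 6; 5; 15; 7; 8; 9; 17], [::]));
  ((5, 1, 12), ([:: 12; 13; 2; 1; 9; 10; 8; 16; 5; 4; 15; 7; 18; 17; 6; 14; 3; 11; 0], [::]));
  ((5, 1, 13), ([:: 15; 14; 16; 17; 9; 1; 13; 5; 6; 18; 10; 2; 3; 11; 19; 7; 8; 0; 12; 4], [::]));
  ((5, 1, 14), ([:: 20; 0; 2; 15; 7; 8; 16; 17; 4; 12; 13; 5; 18; 10; 9; 1; 14; 6; 19; 11; 3], [::]));
  ((5, 1, 15), ([:: 3; 2; 4; 18; 17; 16; 8; 0; 14; 6; 20; 12; 11; 19; 5; 13; 21; 7; 15; 1; 9; 10], [::]));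
  ((5, 1, 16), ([:: 13; 14; 22; 21; 0; 8; 7; 15; 16; 1; 9; 17; 2; 10; 18; 3; 11; 19; 4; 12; 20; 5; 6], [::]));
  ((5, 1, 18), ([:: 22; 23; 15; 7; 24; 0; 17; 9; 10; 18; 1; 2; 19; 11; 3; 20; 12; 4; 21; 13; 5; 6; 14; 16; 8], [:: (14, 8)]));
  ((5, 1, 19), ([:: 17; 9; 8; 16; 24; 6; 14; 13; 5; 23; 15; 7; 25; 1; 0; 18; 10; 2; 20; 19; 11; 3; 21; 22; 4; 12], [:: (11, 8)]));
  ((5, 1, 20), ([:: 22; 21; 19; 0; 8; 16; 24; 5; 13; 14; 6; 25; 26; 7; 15; 23; 4; 12; 20; 1; 9; 17; 18; 10; 2; 3; 11], [:: (10, 8)]));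
  ((5, 1, 21), ([:: 25; 5; 13; 14; 6; 26; 27; 19; 11; 3; 23; 15; 7; 9; 17; 18; 10; 2; 22; 21; 1; 0; 20; 12; 4; 24; 16; 8], [:: (12, 8)]));
  ((5, 1, 22), ([:: 2; 23; 21; 13; 5; 6; 14; 15; 7; 28; 20; 12; 4; 25; 17; 9; 10; 18; 26; 27; 19; 11; 3; 24; 16; 8; 0; 1; 22], [:: (14, 8)]));
  ((5, 1, 23), ([:: 12; 4; 5; 13; 14; 6; 28; 20; 21; 29; 1; 9; 17; 25; 3; 11; 19; 27; 26; 18; 10; 2; 24; 16; 8; 0; 22; 23; 15; 7], [:: (10, 8)]));
  ((5, 1, 24), ([:: 0; 1; 9; 17; 16; 8; 10; 18; 26; 25; 2; 3; 11; 19; 27; 4; 12; 20; 28; 5; 13; 21; 29; 6; 14; 22; 30; 7; 15; 23; 24], [:: (14, 8)]));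
  ((1, 13, 1), ([:: 11; 9; 7; 5; 13; 15; 1; 3; 2; 0; 14; 12; 10; 8; 6; 4], [::]));
  ((2, 12, 1), ([:: 15; 1; 3; 4; 6; 8; 10; 2; 0; 14; 12; 13; 11; 9; 7; 5], [::]));
  ((3, 11, 1), ([:: 10; 12; 14; 13; 15; 7; 5; 3; 1; 0; 2; 4; 6; 8; 9; 11], [::]));
  ((4, 10, 1), ([:: 7; 6; 4; 2; 3; 5; 13; 15; 1; 0; 14; 12; 10; 8; 9; 11], [::]));
  ((5, 9, 1), ([:: 3; 1; 9; 8; 7; 5; 6; 4; 2; 0; 14; 15; 13; 11; 12; 10], [::]));
  ((6, 8, 1), ([:: 12; 4; 5; 3; 1; 2; 0; 14; 15; 13; 11; 9; 10; 8; 7; 6], [::]));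
  ((7, 7, 1), ([:: 14; 15; 1; 2; 0; 8; 6; 4; 3; 5; 7; 9; 10; 11; 12; 13], [::]));
  ((8, 6, 1), ([:: 0; 8; 10; 9; 7; 5; 6; 4; 3; 2; 1; 15; 14; 13; 11; 12], [::]));
  ((9, 5, 1), ([:: 6; 5; 7; 8; 10; 9; 1; 3; 4; 2; 0; 15; 14; 13; 12; 11], [::]));
  ((10, 4, 1), ([:: 14; 12; 4; 3; 2; 1; 0; 15; 13; 11; 10; 9; 8; 7; 5; 6], [::]));
  ((11, 3, 1), ([:: 10; 11; 13; 12; 14; 15; 0; 8; 9; 7; 6; 5; 4; 3; 2; 1], [::]));
  ((12, 2, 1), ([:: 15; 13; 12; 11; 10; 9; 8; 7; 6; 14; 0; 1; 2; 3; 4; 5], [::]));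
  ((13, 1, 1), ([:: 2; 1; 3; 4; 5; 6; 7; 8; 0; 15; 14; 13; 12; 11; 10; 9], [::]));
  ((1, 14, 1), ([:: 13; 15; 0; 1; 3; 5; 7; 9; 11; 2; 4; 6; 8; 10; 12; 14; 16], [:: (3, 2)]));
  ((2, 13, 1), ([:: 8; 10; 12; 14; 16; 1; 3; 5; 6; 7; 9; 11; 13; 4; 2; 0; 15], [:: (6, 1)]));
  ((3, 12, 1), ([:: 7; 5; 6; 4; 3; 1; 16; 14; 12; 10; 8; 9; 11; 2; 0; 15; 13], [:: (4, 1)]));
  ((4, 11, 1), ([:: 2; 3; 11; 13; 15; 0; 1; 16; 14; 12; 10; 8; 9; 7; 5; 4; 6], [:: (3, 1)]));
  ((5, 10, 1), ([:: 11; 9; 8; 10; 12; 14; 16; 1; 0; 2; 3; 4; 6; 7; 5; 13; 15], [:: (4, 1)]));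
  ((6, 9, 1), ([:: 2; 10; 12; 11; 9; 7; 8; 6; 4; 5; 3; 1; 0; 15; 16; 14; 13], [:: (1, 1)]));
  ((7, 8, 1), ([:: 16; 14; 6; 7; 5; 3; 4; 2; 1; 0; 15; 13; 11; 12; 10; 9; 8], [:: (2, 1)]));
  ((8, 7, 1), ([:: 10; 8; 6; 14; 16; 0; 1; 2; 3; 4; 5; 7; 9; 11; 12; 13; 15], [:: (5, 1)]));
  ((9, 6, 1), ([:: 1; 2; 11; 13; 15; 0; 16; 14; 12; 10; 9; 8; 7; 6; 5; 4; 3], [:: (7, 1)]));
  ((10, 5, 1), ([:: 15; 0; 1; 2; 3; 4; 5; 7; 9; 10; 11; 12; 13; 14; 16; 8; 6], [:: (5, 1)]));
  ((11, 4, 1), ([:: 5; 13; 14; 12; 11; 9; 10; 8; 7; 6; 4; 3; 2; 1; 0; 16; 15], [:: (4, 1)]));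
  ((12, 3, 1), ([:: 13; 14; 16; 15; 0; 1; 2; 3; 4; 12; 11; 10; 9; 8; 7; 5; 6], [:: (3, 1)]));
  ((13, 2, 1), ([:: 12; 14; 13; 11; 10; 9; 8; 7; 15; 16; 0; 1; 2; 3; 4; 5; 6], [:: (3, 1)]));
  ((14, 1, 1), ([:: 1; 10; 9; 8; 7; 6; 5; 4; 3; 2; 0; 16; 15; 14; 13; 12; 11], [:: (6, 1)]));
  ((1, 15, 1), ([:: 2; 0; 16; 14; 12; 10; 8; 6; 4; 5; 3; 1; 17; 7; 9; 11; 13; 15], [:: (8, 2)]));
  ((2, 14, 1), ([:: 16; 0; 2; 4; 14; 12; 10; 8; 7; 9; 11; 13; 15; 17; 1; 3; 5; 6], [:: (10, 2); (6, 1)]));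
  ((3, 13, 1), ([:: 8; 16; 0; 2; 4; 6; 7; 5; 3; 1; 17; 15; 14; 12; 10; 9; 11; 13], [::]));
  ((4, 12, 1), ([:: 9; 7; 15; 17; 0; 16; 14; 12; 13; 11; 10; 8; 6; 4; 2; 1; 3; 5], [::]));
  ((5, 11, 1), ([:: 6; 16; 0; 17; 1; 2; 4; 3; 5; 7; 8; 10; 12; 14; 15; 13; 11; 9], [::]));
  ((6, 10, 1), ([:: 14; 16; 15; 17; 0; 10; 12; 13; 11; 9; 7; 8; 6; 5; 3; 1; 2; 4], [::]));
  ((7, 9, 1), ([:: 2; 12; 11; 13; 14; 15; 16; 0; 17; 1; 3; 5; 4; 6; 8; 10; 9; 7], [::]));
  ((8, 8, 1), ([:: 15; 17; 16; 14; 6; 4; 2; 0; 1; 3; 5; 7; 8; 9; 10; 11; 12; 13], [::]));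
  ((9, 7, 1), ([:: 5; 13; 14; 12; 10; 11; 9; 8; 7; 6; 4; 3; 2; 1; 17; 15; 16; 0], [::]));
  ((10, 6, 1), ([:: 0; 16; 15; 14; 13; 11; 9; 17; 1; 2; 3; 4; 5; 6; 7; 8; 10; 12], [::]));
  ((11, 5, 1), ([:: 3; 1; 2; 0; 16; 17; 15; 13; 14; 4; 5; 6; 7; 8; 9; 10; 11; 12], [::]));
  ((12, 4, 1), ([:: 13; 3; 5; 4; 6; 7; 8; 9; 10; 11; 12; 14; 15; 16; 17; 0; 2; 1], [::]));
  ((13, 3, 1), ([:: 1; 2; 0; 16; 17; 15; 14; 13; 12; 11; 3; 4; 5; 6; 7; 8; 9; 10], [::]));
  ((14, 2, 1), ([:: 16; 14; 13; 12; 11; 10; 9; 8; 7; 6; 5; 15; 17; 0; 1; 2; 3; 4], [::]));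
  ((15, 1, 1), ([:: 0; 8; 7; 6; 5; 4; 3; 2; 1; 17; 16; 15; 14; 13; 12; 11; 10; 9], [::]));
  ((2, 15, 1), ([:: 14; 16; 18; 1; 12; 10; 8; 6; 4; 3; 2; 0; 17; 15; 13; 11; 9; 7; 5], [:: (11, 2); (4, 1)]));
  ((1, 12, 2), ([:: 11; 9; 7; 15; 1; 3; 5; 13; 12; 14; 0; 2; 4; 6; 8; 10], [::]));
  ((2, 11, 2), ([:: 1; 15; 14; 0; 2; 4; 12; 10; 8; 6; 7; 9; 11; 13; 5; 3], [::]));
  ((3, 10, 2), ([:: 4; 5; 7; 6; 8; 10; 2; 0; 14; 12; 13; 15; 1; 3; 11; 9], [::]));
  ((4, 9, 2), ([:: 11; 12; 4; 6; 7; 5; 3; 1; 15; 13; 14; 0; 2; 10; 8; 9], [::]));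
  ((5, 8, 2), ([:: 5; 13; 14; 15; 1; 0; 2; 4; 3; 11; 9; 7; 6; 8; 10; 12], [::]));
  ((6, 7, 2), ([:: 6; 8; 7; 5; 13; 11; 10; 9; 1; 3; 4; 2; 0; 15; 14; 12], [::]));
  ((7, 6, 2), ([:: 4; 3; 5; 7; 8; 6; 14; 15; 1; 0; 2; 10; 9; 11; 12; 13], [::]));
  ((8, 5, 2), ([:: 0; 8; 10; 12; 11; 9; 7; 6; 5; 13; 14; 15; 1; 2; 3; 4], [::]));
  ((9, 4, 2), ([:: 15; 7; 5; 6; 4; 3; 2; 1; 0; 8; 10; 9; 11; 12; 13; 14], [::]));
  ((10, 3, 2), ([:: 2; 3; 5; 6; 7; 8; 10; 9; 1; 0; 15; 14; 13; 11; 12; 4], [::]));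
  ((11, 2, 2), ([:: 0; 15; 13; 14; 6; 7; 8; 9; 10; 11; 12; 4; 5; 3; 2; 1], [::]));
  ((12, 1, 2), ([:: 13; 14; 6; 7; 8; 9; 10; 11; 12; 4; 5; 3; 2; 1; 0; 15], [::]));
  ((1, 13, 2), ([:: 14; 16; 8; 6; 4; 2; 0; 15; 13; 11; 12; 10; 1; 3; 5; 7; 9], [:: (4, 2)]));
  ((2, 12, 2), ([:: 8; 6; 5; 3; 1; 16; 14; 12; 10; 9; 11; 13; 4; 2; 0; 15; 7], [:: (6, 1)]));
  ((3, 11, 2), ([:: 12; 10; 9; 7; 5; 13; 11; 2; 0; 15; 14; 16; 1; 3; 4; 6; 8], [:: (4, 1)]));
  ((4, 10, 2), ([:: 9; 7; 5; 6; 14; 16; 8; 10; 12; 11; 13; 15; 0; 1; 3; 2; 4], [:: (1, 1)]));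
  ((5, 9, 2), ([:: 7; 5; 4; 13; 12; 10; 11; 9; 8; 6; 14; 16; 1; 3; 2; 0; 15], [:: (5, 1)]));
  ((6, 8, 2), ([:: 14; 5; 4; 3; 1; 2; 0; 15; 16; 8; 10; 12; 13; 11; 9; 7; 6], [:: (7, 1)]));
  ((7, 7, 2), ([:: 6; 5; 4; 3; 1; 10; 12; 14; 13; 15; 16; 0; 2; 11; 9; 7; 8], [:: (4, 1)]));
  ((8, 6, 2), ([:: 12; 3; 1; 2; 0; 16; 15; 14; 13; 4; 5; 6; 8; 10; 11; 9; 7], [:: (5, 1)]));
  ((9, 5, 2), ([:: 15; 7; 8; 9; 10; 11; 3; 5; 6; 4; 2; 1; 0; 16; 14; 12; 13], [:: (2, 1)]));
  ((10, 4, 2), ([:: 12; 14; 6; 7; 9; 8; 10; 11; 13; 5; 4; 3; 2; 1; 0; 16; 15], [:: (5, 1)]));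
  ((11, 3, 2), ([:: 7; 6; 15; 16; 14; 13; 12; 11; 10; 8; 9; 0; 1; 2; 3; 5; 4], [:: (7, 1)]));
  ((12, 2, 2), ([:: 9; 0; 2; 1; 3; 4; 5; 6; 7; 8; 16; 15; 14; 13; 12; 11; 10], [:: (7, 1)]));
  ((13, 1, 2), ([:: 2; 3; 11; 12; 13; 14; 15; 16; 0; 1; 10; 9; 8; 7; 6; 4; 5], [:: (3, 1)]));
  ((1, 14, 2), ([:: 0; 10; 12; 14; 16; 8; 6; 4; 2; 1; 17; 15; 13; 11; 9; 7; 5; 3], [:: (8, 2)]));
  ((2, 13, 2), ([:: 16; 0; 2; 3; 1; 17; 15; 5; 7; 9; 11; 13; 14; 4; 6; 8; 10; 12], [:: (14, 1); (6, 2)]));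
  ((3, 12, 2), ([:: 14; 12; 4; 2; 10; 8; 6; 7; 9; 11; 13; 15; 17; 16; 0; 1; 3; 5], [::]));
  ((4, 11, 2), ([:: 1; 11; 10; 12; 13; 3; 5; 7; 9; 8; 6; 4; 2; 0; 16; 14; 15; 17], [::]));
  ((5, 10, 2), ([:: 5; 15; 16; 8; 10; 12; 14; 13; 11; 9; 7; 6; 4; 2; 3; 1; 17; 0], [::]));
  ((6, 9, 2), ([:: 2; 4; 12; 13; 15; 17; 9; 11; 10; 8; 7; 6; 5; 3; 1; 0; 16; 14], [::]));
  ((7, 8, 2), ([:: 3; 5; 6; 14; 16; 8; 7; 9; 11; 10; 12; 13; 15; 17; 0; 1; 2; 4], [::]));
  ((8, 7, 2), ([:: 10; 0; 17; 7; 5; 3; 1; 2; 4; 6; 8; 9; 11; 12; 13; 14; 15; 16], [::]));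
  ((9, 6, 2), ([:: 15; 13; 12; 2; 10; 11; 9; 8; 6; 7; 5; 4; 3; 1; 0; 17; 16; 14], [::]));
  ((10, 5, 2), ([:: 11; 1; 9; 10; 12; 13; 15; 14; 16; 17; 0; 2; 3; 4; 5; 6; 8; 7], [::]));
  ((11, 4, 2), ([:: 6; 7; 17; 15; 14; 13; 11; 12; 10; 9; 8; 16; 0; 1; 2; 3; 4; 5], [::]));
  ((12, 3, 2), ([:: 7; 15; 14; 13; 11; 12; 10; 9; 8; 6; 16; 17; 0; 1; 2; 3; 4; 5], [::]));
  ((13, 2, 2), ([:: 3; 4; 5; 7; 6; 8; 9; 10; 0; 17; 16; 15; 14; 13; 12; 11; 1; 2], [::]));
  ((14, 1, 2), ([:: 0; 8; 7; 6; 5; 4; 3; 2; 1; 9; 10; 11; 12; 13; 14; 15; 17; 16], [::]));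
  ((2, 14, 2), ([:: 13; 15; 17; 0; 2; 4; 6; 7; 9; 11; 12; 14; 16; 8; 10; 18; 1; 3; 5], [:: (7, 1); (2, 2)]));
  ((1, 11, 3), ([:: 0; 2; 4; 12; 10; 8; 6; 14; 15; 13; 11; 9; 1; 3; 5; 7], [::]));
  ((2, 10, 3), ([:: 15; 1; 0; 14; 6; 8; 10; 12; 4; 2; 3; 5; 13; 11; 9; 7], [::]));
  ((3, 9, 3), ([:: 9; 10; 2; 0; 8; 7; 5; 3; 1; 15; 13; 11; 12; 14; 6; 4], [::]));
  ((4, 8, 3), ([:: 14; 13; 5; 7; 9; 1; 15; 0; 2; 4; 3; 11; 12; 10; 8; 6], [::]));
  ((5, 7, 3), ([:: 1; 15; 14; 6; 4; 3; 5; 13; 11; 12; 10; 9; 7; 8; 0; 2], [::]));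
  ((6, 6, 3), ([:: 1; 15; 13; 5; 6; 7; 9; 8; 0; 14; 12; 11; 10; 2; 4; 3], [::]));
  ((7, 5, 3), ([:: 3; 5; 6; 7; 9; 8; 0; 14; 13; 15; 1; 2; 10; 11; 12; 4], [::]));
  ((8, 4, 3), ([:: 5; 6; 7; 8; 0; 2; 10; 9; 11; 12; 4; 3; 1; 15; 14; 13], [::]));
  ((9, 3, 3), ([:: 15; 1; 2; 10; 11; 3; 4; 5; 6; 7; 9; 8; 0; 14; 13; 12], [::]));
  ((10, 2, 3), ([:: 2; 1; 15; 7; 6; 5; 4; 3; 11; 10; 9; 8; 0; 14; 13; 12], [::]));
  ((11, 1, 3), ([:: 2; 1; 9; 10; 8; 0; 15; 14; 13; 12; 11; 3; 4; 5; 6; 7], [::]));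
  ((1, 12, 3), ([:: 0; 2; 4; 6; 5; 13; 15; 7; 9; 11; 3; 1; 16; 14; 12; 10; 8], [:: (2, 2)]));
  ((2, 11, 3), ([:: 6; 4; 12; 14; 16; 1; 10; 8; 7; 9; 11; 13; 5; 3; 2; 0; 15], [:: (3, 1)]));
  ((3, 10, 3), ([:: 15; 14; 12; 4; 6; 8; 10; 1; 16; 0; 2; 3; 5; 13; 11; 9; 7], [:: (3, 1)]));
  ((4, 9, 3), ([:: 12; 11; 10; 8; 16; 14; 6; 4; 2; 3; 5; 7; 9; 1; 0; 15; 13], [:: (1, 1)]));
  ((5, 8, 3), ([:: 4; 3; 2; 11; 13; 12; 14; 15; 0; 9; 7; 5; 6; 8; 10; 1; 16], [:: (4, 1)]));
  ((6, 7, 3), ([:: 9; 8; 10; 12; 13; 11; 2; 1; 3; 4; 5; 7; 15; 0; 16; 14; 6], [:: (5, 1)]));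
  ((7, 6, 3), ([:: 16; 15; 7; 6; 4; 2; 0; 1; 10; 8; 9; 11; 12; 13; 14; 5; 3], [:: (7, 1)]));
  ((8, 5, 3), ([:: 12; 13; 4; 3; 2; 0; 16; 1; 10; 11; 9; 7; 8; 6; 5; 14; 15], [:: (6, 1)]));
  ((9, 4, 3), ([:: 0; 1; 2; 4; 6; 7; 5; 13; 12; 14; 15; 16; 8; 9; 10; 11; 3], [:: (2, 1)]));
  ((10, 3, 3), ([:: 1; 2; 3; 11; 9; 10; 12; 4; 5; 6; 7; 8; 16; 0; 15; 14; 13], [:: (2, 1)]));
  ((11, 2, 3), ([:: 14; 16; 8; 7; 15; 13; 12; 11; 10; 9; 0; 1; 2; 3; 4; 5; 6], [:: (2, 1)]));
  ((12, 1, 3), ([:: 0; 1; 2; 3; 4; 12; 11; 10; 9; 8; 7; 15; 16; 14; 13; 5; 6], [:: (1, 1)]));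
  ((1, 13, 3), ([:: 4; 2; 12; 10; 8; 6; 14; 16; 0; 17; 1; 3; 5; 7; 15; 13; 11; 9], [:: (3, 2)]));
  ((2, 12, 3), ([:: 0; 16; 14; 15; 13; 11; 1; 17; 9; 7; 5; 3; 2; 12; 10; 8; 6; 4], [:: (9, 2); (3, 1)]));
  ((3, 11, 3), ([:: 8; 9; 17; 0; 2; 4; 6; 16; 14; 12; 10; 11; 13; 15; 7; 5; 3; 1], [::]));
  ((4, 10, 3), ([:: 1; 11; 10; 2; 0; 16; 17; 15; 13; 12; 14; 4; 6; 8; 9; 7; 5; 3], [::]));
  ((5, 9, 3), ([:: 4; 5; 15; 14; 12; 2; 3; 1; 17; 16; 0; 10; 8; 6; 7; 9; 11; 13], [::]));
  ((6, 8, 3), ([:: 6; 14; 12; 4; 3; 5; 7; 17; 1; 2; 0; 16; 15; 13; 11; 10; 9; 8], [::]));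
  ((7, 7, 3), ([:: 8; 10; 11; 9; 1; 0; 2; 12; 14; 13; 15; 16; 17; 7; 5; 6; 4; 3], [::]));
  ((8, 6, 3), ([:: 14; 6; 7; 9; 10; 8; 0; 1; 2; 3; 5; 4; 12; 11; 13; 15; 17; 16], [::]));
  ((9, 5, 3), ([:: 9; 7; 5; 13; 12; 2; 3; 4; 6; 8; 10; 11; 1; 0; 17; 16; 15; 14], [::]));
  ((10, 4, 3), ([:: 10; 11; 9; 17; 1; 2; 3; 4; 5; 13; 12; 14; 15; 16; 0; 8; 7; 6], [::]));
  ((11, 3, 3), ([:: 11; 3; 5; 4; 2; 12; 13; 14; 15; 16; 17; 1; 0; 10; 9; 8; 7; 6], [::]));
  ((12, 2, 3), ([:: 9; 17; 1; 0; 16; 8; 7; 6; 5; 4; 3; 2; 10; 11; 12; 13; 14; 15], [::]));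
  ((13, 1, 3), ([:: 1; 0; 2; 12; 11; 10; 9; 8; 7; 17; 16; 15; 14; 13; 3; 4; 5; 6], [::]));
  ((2, 13, 3), ([:: 10; 8; 6; 17; 0; 2; 4; 15; 14; 12; 13; 11; 9; 7; 5; 16; 18; 1; 3], [:: (15, 1); (7, 2)]));
  ((1, 10, 4), ([:: 1; 9; 7; 5; 3; 11; 13; 15; 14; 6; 8; 10; 12; 4; 2; 0], [::]));
  ((2, 9, 4), ([:: 0; 15; 7; 5; 13; 11; 9; 1; 3; 2; 4; 6; 14; 12; 10; 8], [::]));
  ((3, 8, 4), ([:: 5; 13; 12; 14; 6; 4; 2; 3; 1; 15; 7; 9; 11; 10; 8; 0], [::]));
  ((4, 7, 4), ([:: 8; 7; 5; 13; 14; 6; 4; 12; 10; 9; 11; 3; 1; 15; 0; 2], [::]));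
  ((5, 6, 4), ([:: 15; 0; 14; 6; 8; 7; 5; 13; 12; 4; 2; 1; 3; 11; 9; 10], [::]));
  ((6, 5, 4), ([:: 9; 10; 11; 13; 15; 7; 5; 4; 12; 14; 6; 8; 0; 1; 2; 3], [::]));
  ((7, 4, 4), ([:: 8; 10; 9; 1; 3; 11; 12; 4; 2; 0; 15; 14; 13; 5; 6; 7], [::]));
  ((8, 3, 4), ([:: 1; 2; 0; 15; 13; 5; 6; 14; 12; 4; 3; 11; 10; 9; 8; 7], [::]));
  ((9, 2, 4), ([:: 2; 10; 12; 13; 11; 3; 4; 5; 6; 14; 15; 0; 1; 9; 8; 7], [::]));
  ((10, 1, 4), ([:: 1; 9; 11; 10; 2; 3; 4; 12; 13; 14; 15; 0; 8; 7; 6; 5], [::]));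
  ((1, 11, 4), ([:: 7; 5; 13; 15; 14; 12; 10; 8; 16; 1; 3; 11; 9; 0; 2; 4; 6], [:: (2, 2)]));
  ((2, 10, 4), ([:: 16; 14; 12; 4; 6; 8; 10; 1; 2; 3; 11; 9; 7; 5; 13; 15; 0], [:: (3, 1)]));
  ((3, 9, 4), ([:: 0; 1; 9; 8; 6; 4; 2; 10; 12; 14; 16; 15; 7; 5; 3; 11; 13], [:: (1, 1)]));
  ((4, 8, 4), ([:: 9; 11; 12; 10; 8; 16; 14; 5; 6; 7; 15; 13; 4; 2; 0; 1; 3], [:: (6, 1)]));
  ((5, 7, 4), ([:: 16; 14; 5; 3; 4; 6; 7; 8; 9; 0; 15; 13; 11; 2; 1; 10; 12], [:: (7, 1)]));
  ((6, 6, 4), ([:: 0; 2; 3; 4; 12; 10; 11; 9; 7; 15; 14; 13; 5; 6; 8; 16; 1], [:: (3, 1)]));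
  ((7, 5, 4), ([:: 9; 11; 3; 5; 6; 4; 2; 1; 10; 12; 13; 14; 15; 7; 8; 16; 0], [:: (2, 1)]));
  ((8, 4, 4), ([:: 2; 4; 5; 6; 7; 8; 16; 1; 10; 11; 9; 0; 15; 14; 13; 12; 3], [:: (7, 1)]));
  ((9, 3, 4), ([:: 5; 4; 3; 1; 10; 11; 2; 0; 16; 8; 9; 7; 6; 15; 14; 13; 12], [:: (7, 1)]));
  ((10, 2, 4), ([:: 8; 16; 0; 1; 3; 11; 12; 13; 14; 15; 7; 6; 5; 4; 2; 10; 9], [:: (1, 1)]));
  ((11, 1, 4), ([:: 9; 8; 10; 1; 0; 16; 15; 7; 6; 14; 13; 12; 11; 2; 3; 4; 5], [:: (4, 1)]));
  ((1, 12, 4), ([:: 12; 4; 2; 0; 16; 14; 6; 8; 10; 11; 1; 17; 15; 13; 3; 5; 7; 9], [:: (4, 2)]));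
  ((2, 11, 4), ([:: 17; 16; 0; 2; 4; 14; 12; 10; 8; 6; 5; 15; 13; 3; 1; 11; 9; 7], [:: (11, 2); (6, 1)]));
  ((3, 10, 4), ([:: 0; 2; 12; 14; 15; 13; 5; 7; 9; 11; 10; 8; 16; 6; 4; 3; 1; 17], [::]));
  ((4, 9, 4), ([:: 17; 15; 16; 6; 8; 7; 5; 4; 14; 12; 10; 0; 2; 3; 1; 9; 11; 13], [::]));
  ((5, 8, 4), ([:: 10; 0; 2; 3; 5; 15; 13; 12; 11; 9; 1; 17; 16; 14; 4; 6; 8; 7], [::]));
  ((6, 7, 4), ([:: 7; 8; 0; 17; 1; 9; 10; 12; 11; 13; 5; 3; 2; 4; 6; 16; 14; 15], [::]));
  ((7, 6, 4), ([:: 7; 8; 0; 1; 11; 10; 9; 17; 15; 16; 14; 12; 13; 3; 5; 6; 4; 2], [::]));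
  ((8, 5, 4), ([:: 1; 9; 11; 10; 8; 16; 0; 17; 15; 7; 6; 5; 4; 3; 2; 12; 14; 13], [::]));
  ((9, 4, 4), ([:: 10; 9; 17; 1; 3; 11; 12; 2; 4; 5; 6; 7; 8; 0; 16; 15; 14; 13], [::]));
  ((10, 3, 4), ([:: 1; 2; 3; 13; 12; 14; 4; 6; 5; 7; 15; 16; 17; 0; 8; 9; 10; 11], [::]));
  ((11, 2, 4), ([:: 0; 8; 6; 16; 15; 14; 13; 12; 11; 10; 9; 17; 7; 5; 4; 3; 2; 1], [::]));
  ((12, 1, 4), ([:: 15; 5; 6; 14; 4; 3; 2; 1; 0; 16; 17; 7; 8; 9; 10; 11; 12; 13], [::]));
  ((2, 12, 4), ([:: 7; 5; 3; 14; 16; 18; 1; 12; 10; 9; 8; 6; 4; 2; 13; 15; 17; 0; 11], [:: (10, 1); (5, 2)]));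
  ((1, 9, 5), ([:: 3; 1; 15; 13; 5; 7; 9; 11; 10; 2; 0; 8; 6; 14; 12; 4], [::]));
  ((2, 8, 5), ([:: 2; 0; 14; 12; 4; 6; 5; 13; 15; 7; 9; 1; 3; 11; 10; 8], [::]));
  ((3, 7, 5), ([:: 15; 1; 3; 11; 9; 8; 7; 5; 13; 12; 4; 6; 14; 0; 2; 10], [::]));
  ((4, 6, 5), ([:: 14; 12; 13; 11; 3; 1; 9; 10; 2; 4; 6; 5; 7; 15; 0; 8], [::]));
  ((5, 5, 5), ([:: 4; 12; 10; 8; 6; 5; 13; 14; 15; 7; 9; 1; 0; 2; 3; 11], [::]));
  ((6, 4, 5), ([:: 8; 0; 15; 7; 9; 11; 12; 10; 2; 1; 3; 4; 5; 13; 14; 6], [::]));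
  ((7, 3, 5), ([:: 10; 8; 7; 9; 1; 0; 15; 14; 6; 5; 13; 12; 4; 2; 3; 11], [::]));
  ((8, 2, 5), ([:: 6; 14; 15; 0; 2; 1; 9; 10; 11; 3; 4; 12; 13; 5; 7; 8], [::]));
  ((9, 1, 5), ([:: 4; 12; 14; 13; 5; 6; 7; 15; 0; 8; 9; 10; 11; 3; 2; 1], [::]));
  ((1, 10, 5), ([:: 1; 16; 14; 6; 8; 10; 9; 7; 15; 0; 2; 4; 12; 3; 5; 13; 11], [:: (4, 2)]));
  ((2, 9, 5), ([:: 11; 9; 7; 15; 13; 5; 3; 1; 0; 16; 14; 6; 8; 10; 2; 4; 12], [:: (1, 1)]));
  ((3, 8, 5), ([:: 7; 6; 4; 2; 10; 12; 14; 16; 8; 9; 1; 0; 15; 13; 5; 3; 11], [:: (1, 1)]));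
  ((4, 7, 5), ([:: 13; 11; 12; 10; 1; 2; 4; 3; 5; 7; 15; 0; 9; 8; 16; 14; 6], [:: (2, 1)]));
  ((5, 6, 5), ([:: 11; 13; 14; 16; 8; 9; 0; 15; 7; 5; 6; 4; 12; 10; 1; 2; 3], [:: (2, 1)]));
  ((6, 5, 5), ([:: 2; 4; 13; 15; 6; 7; 9; 8; 16; 0; 1; 10; 11; 12; 14; 5; 3], [:: (7, 1)]));
  ((7, 4, 5), ([:: 15; 7; 5; 6; 4; 3; 11; 10; 2; 1; 0; 9; 8; 16; 14; 12; 13], [:: (2, 1)]));
  ((8, 3, 5), ([:: 10; 11; 2; 4; 5; 13; 12; 3; 1; 16; 15; 14; 6; 7; 8; 9; 0], [:: (5, 1)]));
  ((9, 2, 5), ([:: 15; 14; 16; 0; 9; 8; 7; 6; 5; 4; 13; 12; 3; 1; 10; 11; 2], [:: (6, 1)]));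
  ((10, 1, 5), ([:: 0; 1; 10; 11; 2; 3; 4; 12; 13; 5; 6; 7; 9; 8; 16; 15; 14], [:: (4, 1)]));
  ((1, 11, 5), ([:: 11; 1; 3; 5; 7; 9; 17; 15; 13; 12; 4; 2; 0; 10; 8; 6; 14; 16], [:: (2, 2)]));
  ((2, 10, 5), ([:: 14; 6; 5; 3; 13; 11; 9; 7; 15; 17; 1; 0; 16; 8; 10; 12; 2; 4], [:: (6, 1); (4, 2)]));
  ((3, 9, 5), ([:: 0; 2; 3; 4; 12; 10; 8; 6; 16; 14; 15; 5; 7; 9; 17; 1; 11; 13], [::]));
  ((4, 8, 5), ([:: 2; 3; 13; 15; 7; 17; 1; 11; 9; 10; 12; 14; 16; 0; 8; 6; 5; 4], [::]));
  ((5, 7, 5), ([:: 4; 6; 14; 12; 11; 1; 17; 0; 2; 3; 13; 5; 7; 9; 10; 8; 16; 15], [::]));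
  ((6, 6, 5), ([:: 8; 6; 4; 12; 14; 13; 11; 10; 0; 1; 9; 7; 17; 16; 15; 5; 3; 2], [::]));
  ((7, 5, 5), ([:: 11; 9; 8; 7; 17; 1; 3; 2; 0; 10; 12; 4; 5; 13; 14; 15; 16; 6], [::]));
  ((8, 4, 5), ([:: 16; 6; 7; 15; 17; 1; 11; 10; 9; 8; 0; 2; 3; 4; 5; 13; 12; 14], [::]));
  ((9, 3, 5), ([:: 10; 0; 16; 15; 13; 14; 12; 2; 1; 11; 3; 4; 5; 6; 7; 8; 9; 17], [::]));
  ((10, 2, 5), ([:: 3; 2; 0; 17; 7; 6; 8; 16; 15; 5; 4; 14; 13; 12; 11; 10; 9; 1], [::]));
  ((11, 1, 5), ([:: 4; 12; 11; 1; 0; 8; 7; 6; 5; 3; 2; 10; 9; 17; 16; 15; 14; 13], [::]));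
  ((2, 11, 5), ([:: 7; 9; 11; 13; 2; 0; 17; 15; 4; 5; 6; 8; 10; 18; 16; 14; 3; 1; 12], [:: (10, 2); (5, 1)]));
  ((1, 8, 6), ([:: 11; 9; 7; 15; 1; 3; 5; 13; 14; 6; 8; 0; 2; 10; 12; 4], [::]));
  ((2, 7, 6), ([:: 7; 9; 8; 0; 2; 10; 12; 4; 6; 14; 15; 1; 3; 11; 13; 5], [::]));
  ((3, 6, 6), ([:: 6; 4; 12; 13; 14; 0; 8; 10; 2; 3; 11; 9; 1; 15; 7; 5], [::]));
  ((4, 5, 6), ([:: 4; 5; 3; 11; 9; 1; 2; 10; 8; 0; 14; 6; 7; 15; 13; 12], [::]));
  ((5, 4, 6), ([:: 4; 6; 5; 13; 14; 15; 7; 8; 0; 2; 10; 12; 11; 3; 1; 9], [::]));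
  ((6, 3, 6), ([:: 2; 3; 1; 9; 7; 15; 0; 8; 6; 14; 13; 5; 4; 12; 11; 10], [::]));
  ((7, 2, 6), ([:: 0; 2; 1; 9; 8; 10; 11; 3; 4; 12; 13; 5; 6; 14; 15; 7], [::]));
  ((8, 1, 6), ([:: 0; 15; 1; 9; 8; 7; 6; 14; 13; 5; 4; 12; 11; 3; 2; 10], [::]));
  ((1, 9, 6), ([:: 1; 3; 5; 13; 12; 10; 8; 16; 14; 6; 4; 2; 11; 9; 0; 15; 7], [:: (5, 2)]));
  ((2, 8, 6), ([:: 1; 0; 9; 7; 15; 13; 11; 3; 5; 6; 14; 16; 8; 10; 12; 4; 2], [:: (1, 1)]));
  ((3, 7, 6), ([:: 1; 0; 15; 13; 5; 3; 11; 12; 4; 2; 10; 8; 16; 14; 6; 7; 9], [:: (1, 1)]));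
  ((4, 6, 6), ([:: 0; 1; 10; 8; 16; 14; 15; 7; 9; 11; 2; 3; 5; 13; 12; 4; 6], [:: (3, 1)]));
  ((5, 5, 6), ([:: 12; 11; 2; 4; 13; 14; 16; 8; 7; 6; 15; 0; 9; 10; 1; 3; 5], [:: (7, 1)]));
  ((6, 4, 6), ([:: 12; 10; 11; 2; 3; 1; 0; 9; 8; 16; 14; 5; 6; 7; 15; 13; 4], [:: (6, 1)]));
  ((7, 3, 6), ([:: 16; 1; 2; 3; 11; 10; 8; 9; 0; 15; 7; 6; 14; 13; 5; 4; 12], [:: (2, 1)]));
  ((8, 2, 6), ([:: 10; 11; 3; 2; 1; 16; 8; 9; 0; 15; 7; 6; 14; 13; 12; 4; 5], [:: (3, 1)]));
  ((9, 1, 6), ([:: 3; 2; 1; 10; 11; 12; 13; 5; 4; 6; 14; 15; 7; 8; 16; 0; 9], [:: (2, 1)]));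
  ((1, 10, 6), ([:: 13; 15; 17; 9; 11; 1; 3; 5; 7; 6; 4; 14; 12; 2; 0; 10; 8; 16], [:: (5, 2)]));
  ((2, 9, 6), ([:: 5; 4; 2; 0; 10; 12; 14; 6; 8; 16; 17; 9; 7; 15; 13; 11; 1; 3], [:: (5, 1); (2, 2)]));
  ((3, 8, 6), ([:: 3; 2; 12; 11; 13; 5; 7; 9; 1; 17; 15; 14; 4; 6; 16; 0; 8; 10], [::]));
  ((4, 7, 6), ([:: 4; 3; 13; 15; 17; 0; 8; 6; 5; 7; 9; 1; 11; 10; 2; 12; 14; 16], [::]));
  ((5, 6, 6), ([:: 12; 14; 4; 5; 3; 13; 15; 17; 16; 6; 7; 8; 0; 2; 10; 11; 9; 1], [::]));
  ((6, 5, 6), ([:: 4; 3; 1; 0; 10; 2; 12; 14; 15; 7; 8; 6; 5; 13; 11; 9; 17; 16], [::]));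
  ((7, 4, 6), ([:: 17; 16; 0; 10; 12; 2; 4; 5; 6; 7; 8; 9; 1; 11; 3; 13; 15; 14], [::]));
  ((8, 3, 6), ([:: 0; 17; 1; 3; 11; 12; 2; 10; 9; 8; 16; 15; 7; 6; 4; 5; 13; 14], [::]));
  ((9, 2, 6), ([:: 12; 14; 6; 4; 5; 13; 3; 11; 10; 2; 1; 0; 17; 16; 15; 7; 8; 9], [::]));
  ((10, 1, 6), ([:: 16; 6; 8; 7; 17; 0; 1; 9; 10; 11; 3; 2; 12; 13; 14; 15; 5; 4], [::]));
  ((2, 10, 6), ([:: 7; 15; 13; 5; 3; 1; 0; 11; 9; 17; 18; 10; 12; 14; 16; 8; 6; 4; 2], [:: (5, 2); (1, 1)]));
  ((1, 7, 7), ([:: 0; 8; 6; 14; 12; 4; 2; 10; 11; 3; 5; 13; 15; 1; 9; 7], [::]));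
  ((2, 6, 7), ([:: 12; 11; 3; 1; 9; 7; 15; 13; 5; 6; 14; 0; 8; 10; 2; 4], [::]));
  ((3, 5, 7), ([:: 11; 13; 5; 6; 14; 12; 4; 3; 1; 9; 7; 15; 0; 8; 10; 2], [::]));
  ((4, 4, 7), ([:: 9; 1; 2; 0; 8; 10; 12; 4; 3; 11; 13; 5; 6; 14; 15; 7], [::]));
  ((5, 3, 7), ([:: 9; 10; 2; 4; 12; 11; 3; 1; 0; 8; 7; 15; 13; 5; 6; 14], [::]));
  ((6, 2, 7), ([:: 2; 1; 9; 10; 11; 3; 4; 12; 14; 6; 5; 13; 15; 7; 8; 0], [::]));
  ((7, 1, 7), ([:: 9; 10; 2; 1; 3; 11; 12; 4; 5; 13; 14; 6; 7; 15; 0; 8], [::]));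
  ((1, 8, 7), ([:: 9; 7; 15; 0; 2; 11; 10; 1; 16; 8; 6; 4; 13; 5; 3; 12; 14], [:: (5, 2)]));
  ((2, 7, 7), ([:: 10; 1; 16; 8; 6; 4; 12; 14; 13; 5; 3; 2; 11; 9; 0; 15; 7], [:: (3, 1)]));
  ((3, 6, 7), ([:: 0; 2; 11; 12; 3; 1; 10; 8; 16; 14; 6; 5; 4; 13; 15; 7; 9], [:: (5, 1)]));
  ((4, 5, 7), ([:: 8; 7; 15; 16; 14; 6; 4; 12; 10; 2; 1; 0; 9; 11; 3; 5; 13], [:: (1, 1)]));
  ((5, 4, 7), ([:: 13; 5; 7; 8; 16; 1; 10; 9; 0; 15; 14; 6; 4; 3; 12; 11; 2], [:: (4, 1)]));
  ((6, 3, 7), ([:: 5; 6; 7; 15; 14; 12; 3; 4; 13; 11; 2; 1; 10; 8; 16; 0; 9], [:: (6, 1)]));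
  ((7, 2, 7), ([:: 8; 7; 15; 14; 6; 5; 4; 13; 12; 3; 2; 11; 9; 0; 16; 1; 10], [:: (5, 1)]));
  ((8, 1, 7), ([:: 15; 13; 5; 4; 3; 12; 11; 2; 1; 10; 9; 0; 16; 8; 7; 6; 14], [:: (5, 1)]));
  ((1, 9, 7), ([:: 8; 10; 0; 16; 14; 6; 4; 2; 12; 11; 1; 17; 9; 7; 15; 13; 5; 3], [:: (4, 2)]));
  ((2, 8, 7), ([:: 7; 5; 15; 17; 9; 8; 6; 4; 14; 16; 0; 10; 12; 2; 3; 13; 11; 1], [:: (9, 1); (6, 2)]));
  ((3, 7, 7), ([:: 16; 14; 4; 2; 10; 12; 13; 5; 6; 8; 0; 1; 3; 11; 9; 17; 15; 7], [::]));
  ((4, 6, 7), ([:: 3; 2; 0; 8; 7; 15; 5; 13; 14; 16; 6; 4; 12; 10; 11; 9; 17; 1], [::]));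
  ((5, 5, 7), ([:: 10; 8; 9; 17; 0; 16; 6; 14; 15; 7; 5; 13; 12; 2; 4; 3; 1; 11], [::]));
  ((6, 4, 7), ([:: 4; 14; 15; 16; 8; 6; 5; 13; 12; 11; 3; 1; 9; 7; 17; 0; 2; 10], [::]));
  ((7, 3, 7), ([:: 6; 14; 12; 13; 5; 15; 16; 0; 10; 11; 3; 4; 2; 1; 9; 8; 7; 17], [::]));
  ((8, 2, 7), ([:: 14; 4; 2; 12; 11; 10; 0; 17; 16; 15; 5; 13; 3; 1; 9; 8; 7; 6], [::]));
  ((9, 1, 7), ([:: 17; 15; 7; 6; 5; 13; 14; 4; 12; 11; 3; 2; 1; 0; 10; 9; 8; 16], [::]));
  ((2, 9, 7), ([:: 16; 8; 6; 4; 3; 14; 12; 1; 18; 10; 11; 0; 2; 13; 15; 17; 9; 7; 5], [:: (6, 2); (4, 1)]));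
  ((1, 6, 8), ([:: 8; 0; 2; 10; 12; 4; 6; 14; 13; 5; 7; 15; 1; 9; 11; 3], [::]));
  ((2, 5, 8), ([:: 14; 6; 5; 13; 15; 7; 9; 1; 3; 11; 12; 4; 2; 10; 8; 0], [::]));
  ((3, 4, 8), ([:: 14; 6; 8; 0; 2; 10; 11; 3; 4; 12; 13; 5; 7; 15; 1; 9], [::]));
  ((4, 3, 8), ([:: 7; 15; 0; 8; 10; 2; 1; 9; 11; 3; 4; 12; 14; 6; 5; 13], [::]));
  ((5, 2, 8), ([:: 11; 3; 2; 10; 12; 4; 5; 13; 14; 6; 7; 15; 1; 9; 8; 0], [::]));
  ((6, 1, 8), ([:: 7; 15; 0; 8; 9; 1; 2; 10; 11; 3; 4; 12; 14; 6; 5; 13], [::]));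
  ((1, 7, 8), ([:: 10; 8; 0; 9; 7; 6; 15; 13; 5; 14; 16; 1; 3; 11; 2; 4; 12], [::]));
  ((2, 6, 8), ([:: 1; 10; 9; 7; 6; 4; 2; 11; 3; 12; 14; 5; 13; 15; 0; 8; 16], [::]));
  ((3, 5, 8), ([:: 12; 11; 10; 9; 1; 3; 5; 14; 6; 4; 13; 15; 7; 16; 8; 0; 2], [::]));
  ((4, 4, 8), ([:: 8; 16; 15; 13; 12; 4; 5; 14; 6; 7; 9; 0; 2; 10; 1; 3; 11], [::]));
  ((5, 3, 8), ([:: 7; 9; 10; 1; 16; 0; 8; 6; 15; 14; 13; 5; 4; 12; 3; 11; 2], [::]));
  ((6, 2, 8), ([:: 11; 3; 4; 2; 10; 9; 1; 0; 8; 7; 16; 15; 6; 14; 12; 13; 5], [::]));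
  ((7, 1, 8), ([:: 6; 4; 3; 12; 13; 5; 14; 15; 7; 8; 16; 0; 9; 1; 2; 10; 11], [::]));
  ((1, 8, 8), ([:: 15; 7; 5; 3; 13; 11; 1; 17; 9; 8; 16; 14; 6; 4; 2; 12; 10; 0], [:: (6, 2)]));
  ((2, 7, 8), ([:: 3; 5; 13; 14; 12; 4; 6; 8; 16; 0; 10; 2; 1; 11; 9; 17; 15; 7], [:: (2, 1)]));
  ((3, 6, 8), ([:: 2; 1; 11; 9; 10; 0; 16; 8; 6; 14; 12; 4; 3; 13; 5; 7; 15; 17], [:: (4, 1)]));
  ((4, 5, 8), ([:: 13; 12; 2; 4; 14; 6; 5; 3; 1; 11; 10; 0; 16; 8; 9; 17; 15; 7], [:: (6, 1)]));
  ((5, 4, 8), ([:: 9; 10; 8; 16; 14; 6; 7; 15; 13; 5; 4; 12; 2; 3; 11; 1; 17; 0], [:: (3, 1)]));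
  ((6, 3, 8), ([:: 6; 8; 16; 17; 9; 7; 15; 14; 12; 13; 5; 4; 3; 11; 1; 2; 10; 0], [:: (2, 1)]));
  ((7, 2, 8), ([:: 14; 13; 3; 4; 2; 12; 11; 1; 0; 10; 9; 17; 16; 8; 6; 5; 15; 7], [:: (6, 1)]));
  ((8, 1, 8), ([:: 5; 4; 3; 13; 12; 2; 1; 11; 10; 0; 17; 9; 8; 16; 14; 6; 7; 15], [:: (5, 1)]));
  ((1, 9, 8), ([:: 3; 1; 12; 14; 16; 8; 6; 4; 2; 13; 5; 7; 15; 17; 9; 11; 0; 18; 10], [:: (3, 2)]));
  ((2, 8, 8), ([:: 5; 7; 15; 17; 9; 11; 0; 2; 13; 14; 3; 4; 6; 8; 16; 18; 10; 12; 1], [:: (7, 2); (4, 1)]));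
  ((3, 7, 8), ([:: 9; 11; 12; 10; 8; 6; 17; 18; 7; 15; 4; 2; 13; 5; 16; 14; 3; 1; 0], [::]));
  ((4, 6, 8), ([:: 14; 12; 10; 11; 9; 17; 6; 5; 16; 8; 0; 18; 7; 15; 13; 2; 4; 3; 1], [::]));
  ((5, 5, 8), ([:: 15; 14; 16; 17; 18; 0; 11; 3; 5; 13; 2; 10; 8; 6; 7; 9; 1; 12; 4], [::]));
  ((6, 4, 8), ([:: 15; 17; 18; 1; 3; 2; 10; 9; 7; 6; 14; 13; 5; 16; 8; 0; 11; 12; 4], [::]));
  ((7, 3, 8), ([:: 9; 10; 12; 13; 15; 4; 5; 16; 14; 6; 17; 18; 7; 8; 0; 11; 3; 2; 1], [::]));
  ((8, 2, 8), ([:: 2; 3; 11; 10; 12; 4; 6; 17; 16; 8; 9; 1; 0; 18; 7; 15; 14; 13; 5], [::]));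
  ((9, 1, 8), ([:: 10; 18; 7; 5; 4; 15; 16; 17; 6; 14; 13; 12; 11; 0; 8; 9; 1; 2; 3], [::]));
  ((2, 9, 8), ([:: 4; 16; 14; 2; 1; 13; 15; 3; 5; 17; 19; 11; 9; 7; 6; 18; 0; 12; 10; 8], [:: (10, 2); (7, 1)]));
  ((1, 6, 9), ([:: 11; 13; 15; 7; 9; 1; 10; 2; 4; 12; 3; 5; 14; 6; 8; 16; 0], [::]));
  ((2, 5, 9), ([:: 4; 13; 12; 14; 16; 8; 10; 1; 9; 0; 2; 11; 3; 5; 6; 15; 7], [::]));
  ((3, 4, 9), ([:: 4; 3; 11; 13; 5; 7; 15; 16; 8; 0; 9; 1; 2; 10; 12; 14; 6], [::]));
  ((4, 3, 9), ([:: 2; 1; 9; 8; 10; 12; 4; 3; 11; 13; 5; 14; 6; 15; 7; 16; 0], [::]));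
  ((5, 2, 9), ([:: 1; 16; 0; 2; 10; 9; 8; 7; 15; 6; 14; 5; 13; 4; 12; 11; 3], [::]));
  ((6, 1, 9), ([:: 15; 0; 1; 9; 8; 16; 7; 6; 14; 5; 4; 13; 12; 3; 11; 10; 2], [::]));
  ((1, 7, 9), ([:: 2; 12; 10; 8; 0; 16; 6; 4; 14; 13; 11; 3; 5; 15; 7; 17; 1; 9], [::]));
  ((2, 6, 9), ([:: 11; 1; 17; 16; 0; 2; 10; 12; 4; 14; 6; 8; 9; 7; 15; 5; 13; 3], [::]));
  ((3, 5, 9), ([:: 4; 14; 12; 2; 10; 9; 8; 6; 16; 0; 1; 11; 3; 13; 15; 5; 7; 17], [::]));
  ((4, 4, 9), ([:: 10; 11; 13; 3; 1; 9; 8; 16; 0; 17; 7; 15; 5; 6; 14; 4; 2; 12], [::]));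
  ((5, 3, 9), ([:: 7; 8; 6; 5; 3; 11; 1; 9; 17; 0; 10; 2; 12; 4; 14; 13; 15; 16], [::]));
  ((6, 2, 9), ([:: 9; 7; 6; 5; 13; 3; 11; 12; 4; 14; 15; 17; 16; 8; 0; 10; 2; 1], [::]));
  ((7, 1, 9), ([:: 14; 15; 13; 3; 11; 10; 0; 1; 2; 12; 4; 5; 6; 16; 8; 7; 17; 9], [::]));
  ((1, 8, 9), ([:: 13; 12; 1; 18; 10; 8; 16; 5; 7; 15; 17; 9; 11; 0; 2; 4; 6; 14; 3], [:: (6, 2)]));
  ((2, 7, 9), ([:: 11; 0; 17; 9; 7; 6; 4; 15; 13; 2; 1; 12; 14; 3; 5; 16; 8; 10; 18], [:: (7, 1)]));
  ((3, 6, 9), ([:: 13; 14; 12; 1; 18; 10; 8; 16; 5; 3; 4; 15; 7; 6; 17; 9; 11; 0; 2], [:: (7, 1)]));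
  ((4, 5, 9), ([:: 12; 1; 3; 4; 6; 14; 16; 8; 9; 17; 18; 10; 11; 0; 2; 13; 5; 7; 15], [:: (4, 1)]));
  ((5, 4, 9), ([:: 16; 15; 17; 9; 8; 7; 5; 13; 2; 0; 11; 10; 18; 1; 12; 4; 3; 14; 6], [:: (4, 1)]));
  ((6, 3, 9), ([:: 7; 6; 5; 16; 8; 10; 18; 0; 11; 9; 17; 15; 4; 3; 14; 13; 2; 1; 12], [:: (7, 1)]));
  ((7, 2, 9), ([:: 6; 7; 15; 14; 3; 4; 5; 16; 8; 9; 17; 0; 11; 10; 18; 1; 12; 13; 2], [:: (7, 1)]));
  ((8, 1, 9), ([:: 18; 0; 11; 10; 12; 1; 2; 13; 5; 4; 3; 14; 6; 7; 15; 16; 8; 9; 17], [:: (4, 1)]));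
  ((1, 9, 9), ([:: 16; 8; 6; 4; 2; 14; 12; 0; 18; 10; 9; 17; 19; 11; 13; 1; 3; 15; 7; 5], [:: (6, 2)]));
  ((2, 8, 9), ([:: 3; 1; 13; 5; 4; 2; 0; 12; 14; 6; 8; 16; 18; 10; 11; 19; 17; 9; 7; 15], [:: (5, 1); (2, 2)]));
  ((3, 7, 9), ([:: 1; 0; 2; 3; 5; 17; 19; 11; 9; 7; 15; 13; 12; 4; 16; 8; 10; 18; 6; 14], [::]));
  ((4, 6, 9), ([:: 10; 2; 3; 4; 5; 17; 9; 1; 19; 11; 13; 15; 7; 8; 16; 14; 12; 0; 18; 6], [::]));
  ((5, 5, 9), ([:: 6; 18; 19; 17; 5; 7; 9; 1; 13; 15; 14; 12; 0; 8; 16; 4; 3; 2; 10; 11], [::]));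
  ((6, 4, 9), ([:: 17; 19; 1; 0; 18; 10; 11; 9; 8; 16; 4; 12; 13; 5; 6; 14; 2; 3; 15; 7], [::]));
  ((7, 3, 9), ([:: 9; 10; 18; 6; 4; 12; 11; 13; 14; 2; 1; 0; 19; 7; 15; 3; 5; 17; 16; 8], [::]));
  ((8, 2, 9), ([:: 7; 8; 6; 5; 3; 2; 14; 13; 1; 9; 17; 18; 10; 11; 19; 0; 12; 4; 16; 15], [::]));
  ((9, 1, 9), ([:: 17; 9; 11; 10; 18; 6; 5; 13; 12; 4; 16; 8; 7; 19; 0; 1; 2; 3; 15; 14], [::]));
  ((2, 9, 9), ([:: 14; 1; 3; 4; 6; 8; 16; 18; 10; 12; 20; 19; 11; 9; 17; 15; 7; 5; 13; 0; 2], [:: (4, 1); (2, 2)]));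
  ((1, 6, 10), ([:: 2; 10; 12; 14; 16; 0; 8; 6; 4; 3; 11; 1; 9; 17; 7; 15; 5; 13], [::]));
  ((2, 5, 10), ([:: 17; 7; 5; 15; 14; 4; 2; 12; 10; 0; 16; 6; 8; 9; 1; 11; 3; 13], [::]));
  ((3, 4, 10), ([:: 15; 14; 6; 7; 17; 9; 1; 11; 13; 5; 3; 4; 2; 12; 10; 0; 8; 16], [::]));
  ((4, 3, 10), ([:: 6; 14; 15; 16; 17; 9; 11; 1; 3; 13; 5; 7; 8; 0; 10; 2; 12; 4], [::]));
  ((5, 2, 10), ([:: 15; 7; 5; 4; 3; 13; 12; 14; 6; 16; 8; 0; 17; 9; 1; 11; 10; 2], [::]));
  ((6, 1, 10), ([:: 10; 11; 13; 5; 15; 16; 8; 0; 1; 9; 17; 7; 6; 14; 4; 3; 2; 12], [::]));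
  ((1, 7, 10), ([:: 2; 10; 12; 14; 3; 1; 0; 8; 6; 17; 9; 11; 13; 5; 16; 18; 7; 15; 4], [::]));
  ((2, 6, 10), ([:: 10; 11; 3; 5; 7; 15; 13; 14; 6; 17; 9; 1; 12; 4; 2; 0; 8; 16; 18], [::]));
  ((3, 5, 10), ([:: 1; 18; 16; 17; 15; 7; 5; 13; 2; 10; 9; 8; 0; 11; 3; 14; 6; 4; 12], [::]));
  ((4, 4, 10), ([:: 10; 12; 11; 0; 8; 9; 17; 18; 7; 15; 4; 6; 14; 16; 5; 13; 2; 3; 1], [::]));
  ((5, 3, 10), ([:: 3; 2; 0; 18; 1; 9; 17; 6; 14; 13; 5; 16; 8; 7; 15; 4; 12; 10; 11], [::]));
  ((6, 2, 10), ([:: 8; 16; 17; 9; 1; 18; 0; 11; 12; 4; 5; 13; 15; 7; 6; 14; 3; 2; 10], [::]));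
  ((7, 1, 10), ([:: 0; 2; 10; 9; 1; 12; 11; 3; 14; 13; 5; 4; 15; 16; 8; 7; 18; 17; 6], [::]));
  ((1, 8, 10), ([:: 13; 15; 7; 5; 17; 9; 11; 19; 1; 3; 4; 16; 8; 6; 18; 10; 12; 0; 2; 14], [:: (7, 2)]));
  ((2, 7, 10), ([:: 16; 15; 7; 9; 17; 19; 11; 3; 5; 13; 1; 2; 4; 12; 0; 18; 10; 8; 6; 14], [:: (2, 1)]));
  ((3, 6, 10), ([:: 2; 3; 4; 12; 0; 18; 10; 8; 16; 14; 6; 5; 13; 1; 19; 11; 9; 17; 15; 7], [:: (3, 1)]));
  ((4, 5, 10), ([:: 2; 10; 9; 1; 0; 12; 4; 6; 14; 13; 5; 3; 11; 19; 17; 15; 7; 8; 16; 18], [:: (1, 1)]));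
  ((5, 4, 10), ([:: 16; 8; 6; 14; 12; 0; 1; 2; 10; 18; 19; 11; 3; 4; 5; 13; 15; 7; 9; 17], [:: (1, 1)]));
  ((6, 3, 10), ([:: 18; 17; 19; 11; 3; 2; 10; 9; 1; 0; 12; 4; 5; 13; 15; 7; 8; 16; 14; 6], [:: (1, 1)]));
  ((7, 2, 10), ([:: 4; 12; 10; 18; 0; 19; 11; 3; 2; 1; 13; 5; 6; 14; 15; 7; 8; 16; 17; 9], [:: (2, 1)]));
  ((8, 1, 10), ([:: 19; 18; 17; 9; 10; 11; 12; 0; 1; 13; 5; 4; 16; 8; 6; 14; 2; 3; 15; 7], [:: (5, 1)]));
  ((1, 9, 10), ([:: 2; 4; 6; 7; 15; 17; 9; 11; 19; 0; 13; 5; 3; 16; 8; 10; 18; 20; 12; 14; 1], [:: (4, 2)]));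
  ((2, 8, 10), ([:: 19; 11; 9; 17; 4; 6; 7; 15; 13; 0; 2; 1; 14; 12; 20; 18; 10; 8; 16; 3; 5], [:: (7, 1); (5, 2)]));
  ((3, 7, 10), ([:: 10; 8; 9; 11; 13; 0; 20; 12; 4; 17; 19; 6; 14; 16; 3; 1; 2; 15; 7; 5; 18], [::]));
  ((4, 6, 10), ([:: 9; 17; 16; 18; 5; 3; 4; 6; 7; 15; 2; 10; 8; 0; 13; 11; 19; 20; 12; 14; 1], [::]));
  ((5, 5, 10), ([:: 12; 14; 16; 8; 9; 11; 3; 5; 13; 0; 1; 20; 19; 6; 7; 15; 2; 10; 18; 17; 4], [::]));
  ((6, 4, 10), ([:: 4; 17; 16; 8; 6; 19; 0; 1; 20; 7; 15; 2; 3; 11; 12; 14; 13; 5; 18; 10; 9], [::]));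
  ((7, 3, 10), ([:: 11; 10; 12; 13; 15; 7; 8; 0; 20; 19; 6; 14; 1; 9; 17; 4; 5; 18; 16; 3; 2], [::]));
  ((8, 2, 10), ([:: 2; 3; 16; 8; 0; 1; 14; 15; 7; 9; 17; 4; 6; 5; 13; 12; 20; 19; 18; 10; 11], [::]));
  ((9, 1, 10), ([:: 5; 6; 7; 15; 17; 9; 8; 16; 3; 4; 12; 11; 19; 18; 10; 2; 1; 14; 13; 0; 20], [::]));
  ((2, 9, 10), ([:: 15; 1; 21; 19; 11; 13; 12; 20; 18; 10; 8; 16; 2; 0; 14; 6; 4; 3; 17; 9; 7; 5], [:: (6, 2); (4, 1)]));
  ((1, 6, 11), ([:: 4; 12; 13; 5; 7; 15; 17; 9; 1; 18; 16; 8; 6; 14; 3; 11; 0; 2; 10], [:: (10, 8)]));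
  ((2, 5, 11), ([:: 8; 16; 18; 0; 17; 9; 1; 3; 11; 10; 2; 13; 5; 7; 15; 4; 12; 14; 6], [:: (9, 8)]));
  ((3, 4, 11), ([:: 16; 8; 0; 17; 15; 7; 18; 10; 2; 1; 9; 11; 3; 4; 12; 14; 6; 5; 13], [:: (9, 8)]));
  ((4, 3, 11), ([:: 2; 10; 18; 7; 15; 4; 12; 11; 3; 5; 13; 14; 6; 8; 16; 17; 0; 1; 9], [:: (9, 8)]));
  ((5, 2, 11), ([:: 4; 12; 1; 18; 10; 9; 17; 0; 11; 3; 2; 13; 5; 6; 14; 15; 7; 8; 16], [:: (11, 8)]));
  ((6, 1, 11), ([:: 3; 11; 10; 2; 1; 9; 17; 16; 8; 0; 18; 7; 15; 14; 6; 4; 12; 13; 5], [:: (8, 8)]));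
  ((1, 7, 11), ([:: 14; 6; 18; 0; 2; 10; 12; 4; 16; 8; 7; 15; 13; 5; 17; 19; 1; 9; 11; 3], [:: (9, 8)]));
  ((2, 6, 11), ([:: 7; 15; 3; 11; 10; 2; 0; 18; 16; 8; 6; 14; 12; 4; 5; 13; 1; 9; 17; 19], [:: (10, 8)]));
  ((3, 5, 11), ([:: 12; 4; 3; 11; 13; 5; 7; 15; 16; 8; 6; 14; 2; 10; 18; 0; 1; 9; 17; 19], [:: (10, 8)]));
  ((4, 4, 11), ([:: 4; 12; 14; 6; 7; 15; 13; 5; 17; 9; 11; 19; 18; 10; 2; 3; 1; 0; 8; 16], [:: (12, 8)]));
  ((5, 3, 11), ([:: 10; 2; 1; 9; 11; 3; 4; 12; 13; 5; 17; 19; 0; 8; 16; 18; 6; 14; 15; 7], [:: (8, 8)]));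
  ((6, 2, 11), ([:: 5; 13; 14; 6; 7; 15; 3; 11; 19; 18; 0; 8; 9; 1; 2; 10; 12; 4; 16; 17], [:: (8, 8)]));
  ((7, 1, 11), ([:: 1; 0; 12; 4; 5; 13; 15; 7; 8; 16; 17; 9; 10; 18; 19; 11; 3; 2; 14; 6], [:: (11, 8)]));
  ((1, 8, 11), ([:: 17; 9; 7; 15; 13; 5; 3; 16; 8; 6; 14; 1; 20; 12; 4; 2; 0; 19; 11; 10; 18], [:: (12, 8); (4, 2)]));
  ((2, 7, 11), ([:: 13; 5; 3; 11; 19; 20; 1; 9; 17; 15; 7; 6; 14; 12; 4; 2; 0; 8; 16; 18; 10], [:: (20, 1); (11, 8)]));
  ((3, 6, 11), ([:: 6; 14; 12; 4; 3; 11; 13; 5; 7; 15; 17; 9; 1; 20; 19; 18; 10; 2; 0; 8; 16], [:: (20, 1); (11, 8)]));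
  ((4, 5, 11), ([:: 5; 13; 14; 6; 4; 12; 11; 3; 1; 9; 17; 15; 7; 20; 19; 18; 16; 8; 0; 2; 10], [:: (20, 1); (10, 8)]));
  ((5, 4, 11), ([:: 19; 18; 10; 2; 4; 12; 20; 0; 1; 9; 17; 16; 8; 6; 14; 15; 7; 5; 13; 11; 3], [:: (11, 8); (1, 1)]));
  ((6, 3, 11), ([:: 9; 17; 18; 10; 2; 0; 1; 3; 11; 19; 20; 7; 15; 16; 8; 6; 14; 13; 5; 4; 12], [:: (20, 1); (12, 8)]));
  ((7, 2, 11), ([:: 15; 7; 5; 13; 14; 6; 4; 12; 11; 3; 2; 10; 18; 19; 20; 0; 8; 16; 17; 9; 1], [:: (19, 1); (8, 8)]));
  ((8, 1, 11), ([:: 4; 5; 13; 0; 20; 12; 11; 19; 18; 10; 9; 17; 16; 8; 7; 15; 2; 3; 1; 14; 6], [:: (13, 8); (5, 1)]));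
  ((1, 9, 11), ([:: 0; 8; 16; 14; 6; 20; 18; 10; 2; 4; 12; 13; 5; 7; 15; 17; 19; 21; 1; 9; 11; 3], [:: (20, 2); (8, 8)]));
  ((2, 8, 11), ([:: 18; 16; 8; 0; 20; 19; 17; 9; 1; 21; 7; 15; 13; 5; 3; 11; 10; 2; 4; 12; 14; 6], [:: (20, 1); (18, 2); (10, 8)]));
  ((3, 7, 11), ([:: 9; 17; 15; 7; 5; 13; 11; 3; 1; 21; 0; 8; 16; 2; 4; 12; 14; 6; 20; 19; 18; 10], [:: (11, 8)]));
  ((4, 6, 11), ([:: 20; 6; 14; 0; 2; 10; 18; 19; 21; 1; 3; 11; 12; 4; 5; 13; 15; 7; 9; 17; 16; 8], [:: (10, 8)]));
  ((5, 5, 11), ([:: 19; 20; 0; 8; 16; 18; 10; 9; 17; 3; 11; 12; 4; 6; 14; 15; 7; 5; 13; 21; 1; 2], [:: (11, 8)]));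
  ((6, 4, 11), ([:: 5; 13; 11; 3; 4; 12; 10; 2; 1; 21; 20; 6; 14; 0; 8; 16; 15; 7; 9; 17; 18; 19], [:: (10, 8)]));
  ((7, 3, 11), ([:: 15; 7; 5; 13; 21; 19; 20; 6; 14; 16; 17; 18; 4; 12; 11; 3; 2; 10; 9; 1; 0; 8], [:: (8, 8)]));
  ((8, 2, 11), ([:: 2; 10; 18; 16; 8; 7; 15; 14; 6; 5; 4; 3; 11; 19; 17; 9; 1; 0; 21; 13; 12; 20], [:: (14, 8)]));
  ((9, 1, 11), ([:: 20; 21; 7; 15; 16; 8; 6; 14; 0; 1; 2; 10; 11; 3; 4; 12; 13; 5; 19; 18; 17; 9], [:: (10, 8)]));
  ((2, 9, 11), ([:: 20; 18; 16; 8; 0; 2; 10; 12; 4; 6; 14; 15; 7; 22; 21; 19; 17; 9; 1; 3; 11; 13; 5], [:: (22, 1); (20, 2); (8, 8)]));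
  ((1, 6, 12), ([:: 7; 15; 13; 5; 3; 1; 9; 17; 19; 11; 10; 18; 6; 14; 16; 8; 0; 12; 4; 2], [:: (12, 8)]));
  ((2, 5, 12), ([:: 17; 5; 13; 1; 9; 8; 0; 18; 16; 14; 6; 4; 12; 10; 2; 3; 11; 19; 7; 15], [:: (8, 8)]));
  ((3, 4, 12), ([:: 13; 5; 6; 14; 2; 1; 19; 11; 3; 15; 7; 9; 17; 16; 8; 10; 18; 0; 12; 4], [:: (12, 8)]));
  ((4, 3, 12), ([:: 1; 9; 11; 3; 2; 10; 18; 6; 14; 15; 7; 5; 13; 12; 4; 16; 8; 0; 19; 17], [:: (8, 8)]));
  ((5, 2, 12), ([:: 7; 15; 13; 5; 6; 14; 16; 8; 0; 12; 4; 3; 11; 19; 18; 17; 9; 1; 2; 10], [:: (10, 8)]));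
  ((6, 1, 12), ([:: 12; 4; 2; 3; 11; 19; 0; 1; 13; 5; 17; 9; 10; 18; 6; 14; 15; 7; 8; 16], [:: (12, 8)]));
  ((1, 7, 12), ([:: 3; 4; 12; 20; 1; 14; 6; 8; 16; 18; 10; 2; 0; 13; 5; 7; 15; 17; 9; 11; 19], [:: (12, 8)]));
  ((2, 6, 12), ([:: 4; 12; 20; 18; 10; 9; 17; 19; 11; 3; 1; 14; 6; 8; 16; 15; 7; 5; 13; 0; 2], [:: (13, 8)]));
  ((3, 5, 12), ([:: 19; 18; 10; 9; 17; 4; 12; 14; 6; 5; 13; 11; 3; 1; 20; 7; 15; 2; 0; 8; 16], [:: (11, 8)]));
  ((4, 4, 12), ([:: 8; 16; 14; 6; 4; 12; 13; 5; 18; 10; 9; 17; 19; 11; 3; 1; 2; 15; 7; 20; 0], [:: (12, 8)]));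
  ((5, 3, 12), ([:: 10; 2; 15; 7; 5; 13; 0; 8; 9; 1; 14; 6; 4; 12; 11; 3; 16; 17; 18; 20; 19], [:: (8, 8)]));
  ((6, 2, 12), ([:: 4; 12; 13; 5; 6; 14; 16; 3; 11; 19; 17; 18; 10; 2; 1; 9; 8; 0; 20; 7; 15], [:: (8, 8)]));
  ((7, 1, 12), ([:: 4; 5; 13; 14; 6; 19; 11; 3; 16; 8; 7; 15; 2; 1; 0; 20; 12; 10; 18; 17; 9], [:: (13, 8)]));
  ((1, 8, 12), ([:: 6; 14; 0; 2; 4; 12; 20; 18; 10; 8; 16; 15; 7; 5; 13; 21; 1; 3; 11; 19; 17; 9], [:: (13, 8); (3, 2)]));
  ((2, 7, 12), ([:: 20; 19; 17; 9; 1; 21; 7; 15; 13; 5; 3; 11; 12; 4; 6; 14; 16; 8; 0; 2; 10; 18], [:: (20, 1); (10, 8)]));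
  ((3, 6, 12), ([:: 7; 15; 14; 6; 5; 19; 11; 13; 21; 1; 3; 17; 9; 8; 16; 2; 4; 18; 10; 12; 20; 0], [:: (14, 8); (6, 1)]));
  ((4, 5, 12), ([:: 14; 6; 7; 15; 1; 21; 13; 5; 4; 3; 17; 9; 11; 19; 18; 10; 12; 20; 0; 2; 16; 8], [:: (14, 8); (5, 1)]));
  ((5, 4, 12), ([:: 1; 15; 7; 6; 14; 16; 8; 10; 18; 4; 5; 13; 21; 0; 2; 3; 17; 9; 11; 19; 20; 12], [:: (13, 8); (5, 1)]));
  ((6, 3, 12), ([:: 6; 14; 12; 4; 5; 13; 21; 0; 1; 9; 17; 15; 7; 8; 16; 18; 10; 2; 3; 11; 19; 20], [:: (10, 8); (1, 1)]));
  ((7, 2, 12), ([:: 19; 20; 21; 7; 15; 13; 5; 4; 12; 11; 3; 2; 10; 18; 17; 9; 1; 0; 8; 16; 14; 6], [:: (20, 1); (8, 8)]));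
  ((8, 1, 12), ([:: 0; 21; 1; 15; 7; 6; 14; 13; 5; 4; 12; 20; 19; 11; 3; 2; 16; 8; 9; 17; 18; 10], [:: (12, 8); (3, 1)]));
  ((1, 9, 12), ([:: 14; 22; 20; 12; 10; 18; 3; 5; 7; 15; 0; 1; 16; 8; 6; 4; 2; 17; 9; 11; 19; 21; 13], [:: (15, 8); (6, 2)]));
  ((2, 8, 12), ([:: 8; 16; 1; 3; 5; 6; 14; 22; 20; 12; 10; 18; 19; 11; 13; 21; 0; 15; 7; 9; 17; 2; 4], [:: (14, 8); (6, 1); (3, 2)]));
  ((3, 7, 12), ([:: 12; 4; 19; 20; 22; 14; 6; 21; 0; 8; 16; 18; 17; 15; 7; 5; 13; 11; 3; 1; 9; 10; 2], [:: (8, 8)]));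
  ((4, 6, 12), ([:: 1; 9; 11; 3; 18; 17; 19; 21; 0; 8; 16; 15; 7; 6; 14; 22; 20; 5; 13; 12; 4; 2; 10], [:: (9, 8)]));
  ((5, 5, 12), ([:: 21; 22; 14; 6; 4; 12; 20; 19; 17; 9; 10; 18; 3; 11; 13; 5; 7; 15; 16; 8; 0; 2; 1], [:: (11, 8)]));
  ((6, 4, 12), ([:: 0; 15; 7; 6; 14; 12; 4; 5; 13; 21; 22; 20; 19; 17; 18; 10; 2; 3; 11; 9; 1; 16; 8], [:: (9, 8)]));
  ((7, 3, 12), ([:: 18; 16; 8; 6; 14; 13; 5; 4; 12; 20; 21; 22; 7; 15; 0; 1; 9; 10; 2; 3; 11; 19; 17], [:: (9, 8)]));
  ((8, 2, 12), ([:: 7; 15; 14; 6; 21; 13; 11; 19; 20; 12; 4; 5; 3; 2; 10; 18; 17; 9; 8; 16; 1; 0; 22], [:: (14, 8)]));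
  ((9, 1, 12), ([:: 3; 11; 9; 1; 2; 10; 18; 19; 20; 12; 4; 5; 13; 14; 6; 21; 22; 0; 15; 7; 8; 16; 17], [:: (9, 8)]));
  ((2, 9, 12), ([:: 22; 21; 19; 17; 9; 1; 23; 7; 15; 13; 5; 3; 11; 12; 4; 6; 14; 16; 8; 0; 2; 10; 18; 20], [:: (22, 1); (19, 2); (11, 8)]));
  ((1, 6, 13), ([:: 2; 15; 7; 5; 13; 0; 19; 11; 3; 1; 14; 6; 4; 17; 9; 8; 16; 18; 10; 12; 20], [:: (13, 8)]));
  ((2, 5, 13), ([:: 12; 4; 6; 14; 16; 8; 9; 17; 15; 7; 20; 1; 2; 10; 18; 5; 13; 0; 19; 11; 3], [:: (10, 8)]));
  ((3, 4, 13), ([:: 15; 7; 8; 16; 18; 10; 2; 4; 12; 20; 0; 13; 5; 6; 14; 1; 3; 11; 19; 17; 9], [:: (13, 8)]));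
  ((4, 3, 13), ([:: 2; 10; 18; 17; 9; 8; 16; 3; 11; 19; 6; 14; 12; 4; 5; 13; 15; 7; 20; 1; 0], [:: (10, 8)]));
  ((5, 2, 13), ([:: 19; 11; 9; 17; 18; 10; 2; 3; 16; 8; 0; 20; 12; 4; 5; 13; 15; 7; 6; 14; 1], [:: (12, 8)]));
  ((6, 1, 13), ([:: 2; 4; 12; 13; 5; 6; 14; 15; 7; 20; 19; 11; 3; 16; 8; 0; 1; 9; 17; 18; 10], [:: (12, 8)]));
  ((1, 7, 13), ([:: 5; 13; 21; 19; 11; 3; 1; 9; 17; 15; 7; 6; 14; 16; 18; 10; 2; 4; 12; 20; 0; 8], [:: (8, 8)]));
  ((2, 6, 13), ([:: 7; 15; 17; 9; 10; 18; 20; 12; 4; 2; 16; 8; 6; 14; 0; 1; 21; 13; 5; 3; 11; 19], [:: (11, 8)]));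
  ((3, 5, 13), ([:: 9; 17; 19; 11; 10; 18; 20; 21; 13; 5; 3; 1; 15; 7; 6; 14; 0; 8; 16; 2; 4; 12], [:: (12, 8)]));
  ((4, 4, 13), ([:: 0; 14; 6; 5; 13; 21; 20; 12; 4; 18; 10; 8; 16; 15; 7; 9; 17; 19; 11; 3; 1; 2], [:: (13, 8)]));
  ((5, 3, 13), ([:: 20; 12; 4; 2; 3; 11; 13; 5; 19; 18; 10; 8; 16; 17; 9; 1; 15; 7; 6; 14; 0; 21], [:: (11, 8)]));
  ((6, 2, 13), ([:: 8; 16; 2; 3; 11; 13; 5; 4; 12; 20; 6; 14; 15; 7; 21; 0; 1; 9; 17; 19; 18; 10], [:: (11, 8)]));
  ((7, 1, 13), ([:: 21; 13; 11; 19; 20; 12; 4; 5; 6; 14; 0; 1; 15; 7; 8; 16; 2; 3; 17; 9; 10; 18], [:: (14, 8)]));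
  ((1, 8, 13), ([:: 0; 2; 10; 18; 16; 8; 9; 17; 15; 7; 5; 13; 21; 19; 11; 3; 1; 22; 14; 6; 4; 12; 20], [:: (15, 8); (2, 2)]));
  ((2, 7, 13), ([:: 12; 4; 6; 14; 16; 8; 0; 21; 20; 18; 10; 2; 3; 11; 19; 17; 9; 1; 22; 7; 15; 13; 5], [:: (21, 1); (12, 8)]));
  ((3, 6, 13), ([:: 11; 19; 18; 10; 2; 0; 8; 16; 14; 6; 4; 12; 20; 21; 22; 7; 15; 13; 5; 3; 1; 9; 17], [:: (21, 1); (13, 8)]));
  ((4, 5, 13), ([:: 3; 4; 6; 14; 22; 20; 12; 11; 19; 18; 10; 8; 16; 1; 2; 17; 9; 7; 15; 0; 21; 13; 5], [:: (13, 8); (4, 1)]));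
  ((5, 4, 13), ([:: 12; 20; 19; 11; 3; 4; 5; 13; 21; 22; 7; 15; 17; 9; 1; 0; 2; 10; 18; 16; 8; 6; 14], [:: (22, 1); (13, 8)]));
  ((6, 3, 13), ([:: 17; 9; 8; 16; 14; 6; 7; 15; 0; 1; 2; 10; 18; 19; 11; 3; 5; 13; 21; 22; 20; 12; 4], [:: (10, 8); (2, 1)]));
  ((7, 2, 13), ([:: 6; 14; 15; 7; 22; 21; 20; 5; 13; 11; 3; 2; 10; 12; 4; 19; 18; 17; 9; 1; 0; 8; 16], [:: (18, 1); (8, 8)]));
  ((8, 1, 13), ([:: 0; 1; 22; 14; 13; 21; 6; 7; 15; 16; 8; 9; 17; 2; 3; 18; 10; 11; 19; 4; 5; 20; 12], [:: (15, 8); (7, 1)]));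
  ((1, 9, 13), ([:: 16; 8; 10; 18; 20; 12; 4; 2; 0; 22; 14; 6; 7; 15; 23; 21; 13; 5; 3; 1; 17; 9; 11; 19], [:: (12, 8); (3, 2)]));
  ((2, 8, 13), ([:: 2; 4; 12; 20; 18; 10; 11; 19; 17; 9; 7; 15; 23; 21; 13; 5; 3; 1; 0; 16; 8; 6; 14; 22], [:: (16, 8); (4, 2); (1, 1)]));
  ((3, 7, 13), ([:: 18; 10; 11; 19; 21; 13; 5; 6; 14; 22; 20; 12; 4; 2; 0; 16; 8; 9; 17; 15; 7; 23; 1; 3], [:: (14, 8)]));
  ((4, 6, 13), ([:: 0; 16; 8; 6; 14; 12; 4; 2; 18; 10; 9; 17; 1; 23; 15; 7; 5; 13; 11; 3; 19; 20; 21; 22], [:: (11, 8)]));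
  ((5, 5, 13), ([:: 7; 15; 14; 6; 8; 16; 18; 10; 2; 3; 19; 11; 9; 17; 1; 0; 23; 21; 13; 5; 4; 12; 20; 22], [:: (13, 8)]));
  ((6, 4, 13), ([:: 11; 3; 1; 2; 10; 18; 19; 21; 13; 5; 4; 12; 20; 22; 14; 6; 7; 15; 17; 9; 8; 16; 0; 23], [:: (10, 8)]));
  ((7, 3, 13), ([:: 4; 12; 20; 18; 10; 9; 17; 19; 21; 13; 5; 6; 14; 22; 23; 15; 7; 8; 16; 0; 1; 2; 3; 11], [:: (11, 8)]));
  ((8, 2, 13), ([:: 6; 14; 15; 7; 8; 16; 18; 10; 2; 3; 19; 11; 9; 17; 1; 0; 23; 22; 21; 13; 5; 4; 12; 20], [:: (12, 8)]));
  ((9, 1, 13), ([:: 7; 15; 14; 6; 22; 21; 5; 13; 12; 4; 20; 19; 11; 3; 2; 10; 9; 1; 23; 0; 8; 16; 17; 18], [:: (8, 8)]));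
  ((2, 9, 13), ([:: 3; 11; 9; 1; 24; 7; 15; 13; 5; 22; 21; 19; 17; 16; 8; 0; 23; 6; 14; 12; 4; 2; 10; 18; 20], [:: (22, 1); (20, 2); (8, 8)]));
  ((1, 6, 14), ([:: 4; 12; 20; 18; 10; 2; 16; 8; 0; 14; 6; 7; 15; 13; 5; 3; 17; 9; 11; 19; 21; 1], [:: (12, 8)]));
  ((2, 5, 14), ([:: 0; 14; 6; 20; 12; 4; 3; 5; 7; 15; 17; 9; 1; 21; 13; 11; 19; 18; 10; 2; 16; 8], [:: (14, 8)]));
  ((3, 4, 14), ([:: 19; 11; 13; 21; 7; 15; 16; 8; 6; 14; 0; 20; 12; 4; 5; 3; 17; 9; 1; 2; 10; 18], [:: (14, 8)]));
  ((4, 3, 14), ([:: 16; 8; 6; 14; 0; 2; 1; 9; 17; 3; 4; 12; 20; 21; 7; 15; 13; 5; 19; 11; 10; 18], [:: (13, 8)]));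
  ((5, 2, 14), ([:: 19; 11; 10; 18; 20; 12; 4; 3; 17; 9; 7; 15; 1; 2; 16; 8; 0; 21; 13; 5; 6; 14], [:: (13, 8)]));
  ((6, 1, 14), ([:: 4; 12; 14; 6; 7; 15; 16; 8; 0; 1; 9; 17; 18; 10; 2; 3; 11; 19; 5; 13; 21; 20], [:: (10, 8)]));
  ((1, 7, 14), ([:: 11; 3; 5; 13; 21; 19; 18; 10; 2; 0; 8; 16; 14; 6; 4; 12; 20; 22; 7; 15; 17; 9; 1], [:: (8, 8)]));
  ((2, 6, 14), ([:: 18; 10; 2; 3; 11; 19; 21; 13; 5; 7; 15; 17; 9; 1; 22; 0; 8; 16; 14; 6; 4; 12; 20], [:: (10, 8)]));
  ((3, 5, 14), ([:: 13; 5; 4; 12; 11; 3; 1; 16; 8; 9; 17; 19; 21; 6; 14; 22; 7; 15; 0; 2; 10; 18; 20], [:: (11, 8)]));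
  ((4, 4, 14), ([:: 10; 18; 20; 12; 4; 19; 11; 3; 2; 1; 16; 8; 9; 17; 15; 7; 5; 13; 21; 0; 22; 14; 6], [:: (13, 8)]));
  ((5, 3, 14), ([:: 2; 17; 9; 11; 19; 21; 13; 12; 20; 5; 4; 3; 18; 10; 8; 16; 1; 0; 15; 7; 6; 14; 22], [:: (14, 8)]));
  ((6, 2, 14), ([:: 12; 4; 2; 3; 11; 19; 20; 5; 13; 14; 6; 21; 22; 7; 15; 0; 1; 9; 17; 18; 10; 8; 16], [:: (11, 8)]));
  ((7, 1, 14), ([:: 21; 22; 1; 0; 15; 7; 6; 14; 13; 5; 20; 19; 4; 12; 11; 3; 18; 10; 2; 17; 9; 8; 16], [:: (10, 8)]));
  ((1, 8, 14), ([:: 9; 17; 19; 11; 3; 1; 23; 21; 13; 5; 7; 15; 14; 6; 22; 20; 12; 4; 2; 10; 18; 16; 8; 0], [:: (22, 2); (14, 8)]));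
  ((2, 7, 14), ([:: 17; 9; 1; 2; 10; 18; 20; 12; 4; 6; 14; 16; 8; 0; 22; 21; 19; 11; 3; 5; 13; 15; 7; 23], [:: (22, 1); (8, 8)]));
  ((3, 6, 14), ([:: 21; 13; 5; 6; 14; 16; 8; 0; 2; 4; 12; 20; 22; 23; 7; 15; 17; 9; 1; 3; 11; 19; 18; 10], [:: (23, 1); (13, 8)]));
  ((4, 5, 14), ([:: 18; 10; 9; 17; 1; 3; 19; 11; 12; 20; 22; 14; 6; 7; 15; 23; 21; 13; 5; 4; 2; 0; 16; 8], [:: (13, 8); (5, 1)]));
  ((5, 4, 14), ([:: 6; 14; 15; 7; 5; 13; 21; 19; 11; 3; 4; 12; 20; 22; 23; 0; 8; 16; 18; 10; 2; 1; 9; 17], [:: (23, 1); (14, 8)]));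
  ((6, 3, 14), ([:: 11; 19; 21; 13; 14; 22; 6; 7; 15; 23; 0; 16; 8; 9; 17; 1; 2; 18; 10; 12; 20; 4; 3; 5], [:: (16, 8); (7, 1)]));
  ((7, 2, 14), ([:: 14; 22; 21; 13; 11; 19; 3; 2; 18; 10; 12; 20; 4; 5; 6; 7; 15; 23; 0; 16; 8; 9; 17; 1], [:: (15, 8); (7, 1)]));
  ((8, 1, 14), ([:: 21; 13; 12; 20; 19; 11; 3; 2; 18; 10; 9; 17; 1; 0; 16; 8; 7; 15; 23; 22; 14; 6; 4; 5], [:: (15, 8); (3, 1)]));
  ((1, 9, 14), ([:: 14; 22; 24; 16; 8; 6; 4; 2; 19; 11; 9; 17; 0; 23; 15; 7; 5; 13; 21; 20; 12; 10; 18; 1; 3], [:: (17, 8); (3, 2)]));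
  ((2, 8, 14), ([:: 12; 20; 22; 14; 6; 5; 3; 1; 18; 10; 8; 16; 24; 0; 17; 9; 7; 15; 23; 21; 13; 11; 19; 2; 4], [:: (17, 8); (6, 1); (3, 2)]));
  ((3, 7, 14), ([:: 2; 4; 12; 13; 5; 7; 15; 17; 9; 10; 18; 20; 3; 11; 19; 21; 22; 14; 6; 23; 0; 8; 16; 24; 1], [:: (12, 8)]));
  ((4, 6, 14), ([:: 9; 1; 3; 11; 12; 4; 6; 14; 16; 8; 0; 24; 7; 15; 23; 21; 13; 5; 22; 20; 19; 17; 18; 10; 2], [:: (9, 8)]));
  ((5, 5, 14), ([:: 21; 13; 5; 7; 15; 23; 6; 14; 12; 4; 2; 10; 18; 17; 9; 8; 16; 24; 0; 1; 3; 11; 19; 20; 22], [:: (10, 8)]));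
  ((6, 4, 14), ([:: 1; 0; 2; 19; 17; 9; 10; 18; 16; 8; 7; 15; 14; 6; 23; 24; 22; 5; 13; 21; 4; 12; 11; 3; 20], [:: (11, 8)]));
  ((7, 3, 14), ([:: 14; 6; 5; 13; 15; 7; 9; 17; 16; 8; 0; 1; 24; 23; 22; 21; 4; 12; 20; 3; 11; 19; 18; 10; 2], [:: (12, 8)]));
  ((8, 2, 14), ([:: 15; 7; 5; 4; 12; 20; 3; 2; 1; 0; 17; 9; 8; 16; 24; 23; 6; 14; 22; 21; 13; 11; 19; 18; 10], [:: (14, 8)]));
  ((9, 1, 14), ([:: 21; 4; 12; 20; 19; 11; 3; 2; 1; 18; 10; 8; 16; 15; 7; 6; 14; 13; 5; 22; 23; 24; 0; 17; 9], [:: (12, 8)]));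
  ((2, 9, 14), ([:: 6; 14; 16; 8; 0; 24; 23; 21; 19; 11; 3; 5; 13; 15; 7; 25; 1; 9; 17; 18; 10; 2; 4; 12; 20; 22], [:: (24, 1); (22, 2); (8, 8)]));
  ((1, 6, 15), ([:: 11; 3; 18; 20; 22; 7; 15; 17; 9; 1; 16; 8; 0; 2; 10; 12; 4; 19; 21; 6; 14; 13; 5], [:: (10, 8)]));
  ((2, 5, 15), ([:: 17; 9; 10; 18; 20; 12; 4; 19; 11; 3; 1; 22; 14; 6; 21; 13; 5; 7; 15; 16; 8; 0; 2], [:: (12, 8)]));
  ((3, 4, 15), ([:: 4; 12; 20; 21; 13; 5; 6; 14; 15; 7; 9; 17; 19; 11; 3; 18; 10; 2; 0; 8; 16; 1; 22], [:: (14, 8)]));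
  ((4, 3, 15), ([:: 16; 8; 10; 18; 20; 5; 13; 21; 22; 0; 15; 7; 6; 14; 12; 4; 19; 11; 3; 2; 17; 9; 1], [:: (11, 8)]));
  ((5, 2, 15), ([:: 10; 18; 19; 11; 9; 17; 2; 3; 1; 16; 8; 7; 15; 0; 22; 14; 6; 21; 13; 5; 4; 12; 20], [:: (12, 8)]));
  ((6, 1, 15), ([:: 11; 3; 18; 17; 16; 8; 0; 22; 7; 15; 14; 6; 21; 13; 5; 20; 19; 4; 12; 10; 2; 1; 9], [:: (8, 8)]));
  ((1, 7, 15), ([:: 18; 20; 4; 12; 10; 2; 0; 16; 8; 6; 14; 22; 23; 7; 15; 17; 1; 9; 11; 3; 19; 21; 5; 13], [:: (9, 8)]));
  ((2, 6, 15), ([:: 18; 10; 8; 16; 0; 22; 6; 14; 15; 7; 23; 1; 9; 17; 19; 11; 3; 5; 13; 21; 20; 12; 4; 2], [:: (11, 8)]));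
  ((3, 5, 15), ([:: 15; 7; 5; 13; 21; 22; 6; 14; 12; 4; 20; 18; 10; 2; 3; 19; 11; 9; 17; 1; 23; 0; 8; 16], [:: (12, 8)]));
  ((4, 4, 15), ([:: 10; 18; 19; 11; 3; 2; 4; 12; 20; 22; 14; 6; 5; 13; 21; 23; 15; 7; 9; 17; 1; 0; 16; 8], [:: (11, 8)]));
  ((5, 3, 15), ([:: 18; 10; 9; 17; 1; 0; 16; 8; 7; 15; 23; 21; 13; 5; 6; 14; 22; 20; 12; 4; 2; 3; 11; 19], [:: (11, 8)]));
  ((6, 2, 15), ([:: 14; 6; 4; 12; 20; 19; 11; 3; 5; 13; 21; 22; 23; 7; 15; 16; 8; 0; 1; 9; 17; 18; 10; 2], [:: (11, 8)]));
  ((7, 1, 15), ([:: 16; 8; 0; 23; 22; 14; 6; 5; 13; 21; 20; 12; 4; 3; 19; 11; 10; 18; 2; 1; 9; 17; 15; 7], [:: (13, 8)]));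
  ((1, 8, 15), ([:: 19; 11; 3; 1; 18; 10; 8; 16; 24; 22; 20; 12; 4; 2; 0; 17; 9; 7; 15; 23; 21; 13; 5; 6; 14], [:: (13, 8); (2, 2)]));
  ((2, 7, 15), ([:: 15; 7; 9; 17; 0; 23; 21; 13; 5; 3; 11; 19; 20; 12; 4; 2; 1; 18; 10; 8; 16; 24; 22; 14; 6], [:: (14, 8); (2, 1)]));
  ((3, 6, 15), ([:: 6; 14; 22; 21; 13; 5; 7; 15; 23; 0; 1; 9; 17; 19; 11; 3; 2; 4; 12; 20; 18; 10; 8; 16; 24], [:: (14, 8); (1, 1)]));
  ((4, 5, 15), ([:: 17; 9; 8; 16; 24; 1; 18; 10; 11; 19; 2; 0; 23; 15; 7; 5; 13; 21; 22; 14; 6; 4; 3; 20; 12], [:: (17, 8); (4, 1)]));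
  ((5, 4, 15), ([:: 10; 18; 19; 11; 3; 2; 1; 0; 17; 9; 7; 15; 23; 21; 13; 5; 4; 12; 20; 22; 14; 6; 8; 16; 24], [:: (14, 8); (3, 1)]));
  ((6, 3, 15), ([:: 9; 1; 0; 8; 16; 14; 6; 23; 24; 7; 15; 13; 5; 22; 21; 20; 12; 4; 3; 11; 19; 17; 18; 10; 2], [:: (21, 1); (8, 8)]));
  ((7, 2, 15), ([:: 2; 1; 24; 16; 8; 7; 15; 23; 0; 17; 9; 10; 18; 19; 11; 3; 4; 12; 20; 21; 13; 5; 6; 14; 22], [:: (11, 8); (2, 1)]));
  ((8, 1, 15), ([:: 20; 12; 4; 5; 13; 14; 6; 23; 22; 21; 19; 11; 3; 2; 10; 18; 17; 9; 1; 0; 8; 16; 15; 7; 24], [:: (23, 1); (12, 8)]));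
  ((1, 9, 15), ([:: 4; 2; 20; 12; 10; 18; 0; 24; 16; 8; 6; 14; 22; 23; 15; 7; 5; 13; 21; 19; 11; 9; 17; 25; 1; 3], [:: (14, 8); (3, 2)]));
  ((2, 8, 15), ([:: 13; 5; 4; 12; 20; 18; 10; 2; 0; 8; 16; 14; 6; 24; 22; 21; 19; 11; 3; 1; 9; 17; 15; 7; 25; 23], [:: (24, 2); (22, 1); (13, 8)]));
  ((3, 7, 15), ([:: 12; 4; 2; 1; 19; 20; 22; 14; 6; 8; 16; 24; 0; 18; 10; 9; 17; 25; 23; 15; 7; 5; 13; 11; 3; 21], [:: (11, 8)]));
  ((4, 6, 15), ([:: 9; 17; 19; 21; 22; 24; 6; 14; 16; 8; 7; 15; 23; 5; 13; 11; 3; 4; 12; 20; 2; 10; 18; 0; 25; 1], [:: (10, 8)]));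
  ((5, 5, 15), ([:: 8; 16; 18; 10; 9; 17; 15; 7; 25; 0; 1; 3; 21; 19; 11; 12; 20; 2; 4; 22; 14; 6; 24; 23; 5; 13], [:: (13, 8)]));
  ((6, 4, 15), ([:: 10; 18; 16; 8; 0; 25; 7; 15; 14; 6; 5; 13; 12; 4; 22; 24; 23; 21; 3; 11; 19; 17; 9; 1; 2; 20], [:: (12, 8)]));
  ((7, 3, 15), ([:: 19; 1; 0; 25; 17; 9; 8; 16; 14; 6; 7; 15; 23; 5; 13; 21; 20; 18; 10; 2; 3; 11; 12; 4; 22; 24], [:: (10, 8)]));
  ((8, 2, 15), ([:: 25; 7; 15; 17; 9; 8; 16; 24; 0; 1; 2; 10; 18; 19; 11; 3; 4; 12; 20; 21; 13; 5; 6; 14; 22; 23], [:: (11, 8)]));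
  ((9, 1, 15), ([:: 17; 9; 1; 2; 10; 12; 4; 3; 11; 19; 18; 0; 8; 16; 15; 7; 25; 24; 23; 22; 14; 6; 5; 13; 21; 20], [:: (10, 8)]));
  ((2, 9, 15), ([:: 3; 11; 19; 21; 13; 5; 7; 15; 23; 25; 26; 1; 9; 17; 18; 10; 2; 0; 8; 16; 14; 6; 4; 12; 20; 22; 24], [:: (26, 1); (24, 2); (10, 8)]));
  ((1, 6, 16), ([:: 20; 12; 4; 2; 18; 10; 8; 16; 0; 22; 14; 6; 7; 15; 23; 1; 9; 17; 19; 11; 3; 5; 13; 21], [:: (13, 8)]));
  ((2, 5, 16), ([:: 6; 14; 22; 20; 12; 4; 2; 18; 10; 11; 19; 3; 5; 13; 21; 23; 15; 7; 9; 17; 1; 0; 16; 8], [:: (14, 8)]));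
  ((3, 4, 16), ([:: 22; 6; 14; 13; 5; 21; 20; 12; 4; 2; 18; 10; 8; 16; 0; 23; 15; 7; 9; 17; 1; 3; 11; 19], [:: (12, 8)]));
  ((4, 3, 16), ([:: 17; 1; 9; 11; 3; 19; 18; 2; 10; 12; 4; 20; 21; 13; 5; 6; 14; 22; 0; 8; 16; 15; 7; 23], [:: (8, 8)]));
  ((5, 2, 16), ([:: 4; 12; 20; 22; 6; 14; 15; 7; 23; 0; 8; 16; 17; 9; 1; 2; 18; 10; 11; 19; 3; 5; 13; 21], [:: (14, 8)]));
  ((6, 1, 16), ([:: 13; 5; 21; 20; 12; 4; 3; 11; 19; 18; 10; 2; 1; 17; 9; 8; 16; 0; 22; 6; 14; 15; 7; 23], [:: (12, 8)]));
  ((1, 7, 16), ([:: 17; 9; 1; 3; 11; 13; 5; 6; 14; 22; 20; 12; 4; 21; 19; 2; 0; 23; 15; 7; 24; 16; 8; 10; 18], [:: (11, 8)]));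
  ((2, 6, 16), ([:: 15; 7; 9; 17; 18; 10; 8; 16; 24; 1; 3; 11; 19; 20; 12; 4; 21; 13; 5; 22; 14; 6; 23; 0; 2], [:: (12, 8)]));
  ((3, 5, 16), ([:: 18; 10; 9; 17; 16; 8; 0; 23; 15; 7; 5; 13; 21; 4; 6; 14; 22; 24; 1; 2; 19; 11; 3; 20; 12], [:: (13, 8)]));
  ((4, 4, 16), ([:: 19; 21; 23; 24; 0; 8; 16; 17; 9; 1; 18; 10; 2; 4; 12; 20; 3; 11; 13; 5; 22; 14; 6; 7; 15], [:: (10, 8)]));
  ((5, 3, 16), ([:: 10; 18; 1; 9; 17; 16; 8; 0; 23; 24; 7; 15; 14; 6; 5; 13; 21; 22; 20; 12; 4; 2; 19; 11; 3], [:: (11, 8)]));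
  ((6, 2, 16), ([:: 9; 17; 15; 7; 24; 23; 6; 14; 22; 21; 13; 5; 4; 12; 20; 19; 11; 3; 2; 10; 18; 16; 8; 0; 1], [:: (11, 8)]));
  ((7, 1, 16), ([:: 21; 13; 5; 4; 12; 20; 3; 11; 19; 2; 1; 0; 8; 16; 24; 23; 22; 14; 6; 7; 15; 17; 9; 10; 18], [:: (14, 8)]));
  ((1, 8, 16), ([:: 9; 17; 25; 1; 19; 11; 13; 21; 3; 5; 7; 15; 23; 22; 14; 6; 4; 2; 20; 12; 10; 18; 0; 24; 16; 8], [:: (16, 8); (4, 2)]));
  ((2, 7, 16), ([:: 8; 16; 24; 22; 14; 6; 4; 5; 13; 21; 23; 15; 7; 9; 17; 25; 1; 19; 11; 3; 2; 0; 18; 10; 12; 20], [:: (15, 8); (3, 1)]));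
  ((3, 6, 16), ([:: 7; 15; 23; 25; 1; 19; 11; 9; 17; 18; 10; 8; 16; 24; 0; 2; 20; 12; 4; 3; 21; 13; 5; 6; 14; 22], [:: (14, 8); (4, 1)]));
  ((4, 5, 16), ([:: 15; 23; 25; 17; 9; 7; 6; 24; 16; 8; 10; 18; 0; 2; 20; 12; 11; 19; 1; 3; 21; 13; 14; 22; 4; 5], [:: (18, 8); (7, 1)]));
  ((5, 4, 16), ([:: 14; 22; 23; 15; 7; 5; 6; 8; 16; 24; 25; 17; 9; 10; 18; 0; 2; 20; 12; 4; 3; 21; 13; 11; 19; 1], [:: (18, 8); (4, 1)]));
  ((6, 3, 16), ([:: 24; 25; 1; 19; 11; 10; 18; 0; 2; 20; 12; 4; 3; 21; 13; 5; 6; 14; 22; 23; 15; 7; 9; 17; 16; 8], [:: (15, 8); (4, 1)]));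
  ((7, 2, 16), ([:: 2; 1; 19; 11; 10; 18; 0; 25; 17; 9; 8; 16; 24; 23; 15; 7; 6; 14; 22; 20; 12; 4; 3; 5; 13; 21], [:: (15, 8); (2, 1)]));
  ((8, 1, 16), ([:: 0; 25; 24; 6; 14; 13; 5; 23; 22; 4; 12; 20; 21; 3; 11; 19; 18; 10; 2; 1; 9; 17; 15; 7; 8; 16], [:: (21, 1); (11, 8)]));
  ((1, 9, 16), ([:: 24; 16; 8; 6; 4; 23; 15; 13; 21; 2; 0; 19; 11; 10; 18; 26; 1; 20; 12; 14; 22; 3; 5; 7; 9; 17; 25], [:: (16, 8); (8, 2)]));
  ((2, 8, 16), ([:: 19; 11; 3; 1; 9; 17; 15; 7; 26; 24; 22; 21; 13; 5; 4; 12; 20; 18; 10; 2; 0; 8; 16; 14; 6; 25; 23], [:: (25, 2); (22, 1); (14, 8)]));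
  ((3, 7, 16), ([:: 3; 11; 19; 17; 9; 7; 15; 23; 4; 12; 13; 5; 24; 25; 6; 14; 16; 8; 10; 18; 26; 1; 20; 22; 21; 2; 0], [:: (12, 8)]));
  ((4, 6, 16), ([:: 15; 7; 5; 13; 14; 6; 8; 16; 24; 23; 25; 0; 26; 18; 10; 2; 4; 12; 20; 1; 9; 17; 19; 11; 3; 22; 21], [:: (12, 8)]));
  ((5, 5, 16), ([:: 24; 16; 8; 7; 15; 14; 6; 5; 3; 11; 19; 0; 25; 17; 9; 1; 26; 18; 10; 2; 4; 23; 22; 20; 12; 13; 21], [:: (14, 8)]));
  ((6, 4, 16), ([:: 22; 23; 25; 6; 14; 15; 7; 26; 24; 5; 4; 2; 21; 13; 12; 20; 1; 3; 11; 19; 0; 8; 16; 17; 9; 10; 18], [:: (14, 8)]));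
  ((7, 3, 16), ([:: 22; 3; 5; 13; 14; 6; 7; 15; 17; 9; 1; 0; 8; 16; 24; 25; 26; 18; 10; 11; 19; 20; 12; 4; 23; 21; 2], [:: (12, 8)]));
  ((8, 2, 16), ([:: 18; 10; 11; 19; 20; 12; 4; 5; 13; 15; 7; 8; 16; 24; 23; 21; 2; 3; 22; 14; 6; 25; 17; 9; 1; 0; 26], [:: (13, 8)]));
  ((9, 1, 16), ([:: 8; 16; 14; 6; 25; 24; 23; 15; 7; 26; 0; 1; 9; 17; 18; 10; 11; 19; 20; 12; 4; 5; 13; 21; 2; 3; 22], [:: (12, 8)]));
  ((2, 9, 16), ([:: 5; 13; 21; 19; 11; 3; 1; 9; 17; 18; 10; 2; 0; 8; 16; 14; 6; 4; 12; 20; 22; 24; 26; 27; 7; 15; 23; 25], [:: (27, 1); (24, 2); (10, 8)]));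
  ((1, 6, 17), ([:: 6; 14; 13; 5; 7; 15; 17; 9; 1; 18; 10; 2; 19; 11; 3; 20; 22; 24; 16; 8; 0; 23; 21; 4; 12], [:: (8, 8)]));
  ((2, 5, 17), ([:: 20; 12; 11; 19; 2; 0; 17; 9; 1; 3; 4; 21; 13; 5; 22; 24; 7; 15; 23; 6; 14; 16; 8; 10; 18], [:: (14, 8)]));
  ((3, 4, 17), ([:: 7; 15; 23; 21; 4; 12; 10; 2; 19; 18; 1; 9; 17; 0; 24; 16; 8; 6; 14; 13; 5; 22; 20; 3; 11], [:: (9, 8)]));
  ((4, 3, 17), ([:: 5; 13; 14; 6; 8; 16; 15; 7; 24; 1; 9; 17; 0; 23; 22; 21; 4; 12; 20; 3; 11; 19; 2; 10; 18], [:: (13, 8)]));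
  ((5, 2, 17), ([:: 2; 10; 12; 4; 3; 11; 13; 5; 22; 21; 20; 19; 18; 1; 9; 17; 0; 8; 16; 24; 7; 15; 23; 6; 14], [:: (9, 8)]));
  ((6, 1, 17), ([:: 8; 16; 17; 9; 7; 15; 14; 6; 23; 24; 0; 1; 18; 10; 2; 19; 11; 3; 20; 12; 4; 21; 22; 5; 13], [:: (13, 8)]));
  ((1, 7, 17), ([:: 9; 17; 25; 1; 3; 11; 19; 21; 23; 15; 7; 5; 13; 14; 6; 24; 16; 8; 0; 18; 10; 12; 20; 2; 4; 22], [:: (13, 8)]));
  ((2, 6, 17), ([:: 0; 2; 3; 5; 13; 21; 23; 15; 7; 25; 1; 19; 11; 9; 17; 18; 10; 8; 16; 24; 6; 14; 22; 4; 12; 20], [:: (12, 8)]));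
  ((3, 5, 17), ([:: 8; 16; 17; 9; 7; 15; 13; 5; 3; 21; 23; 25; 24; 6; 14; 22; 4; 12; 20; 2; 10; 18; 0; 1; 19; 11], [:: (13, 8)]));
  ((4, 4, 17), ([:: 10; 18; 0; 24; 22; 14; 6; 7; 15; 23; 5; 13; 12; 4; 2; 20; 21; 3; 11; 19; 1; 25; 17; 9; 8; 16], [:: (11, 8)]));
  ((5, 3, 17), ([:: 2; 3; 21; 13; 11; 19; 17; 9; 10; 18; 20; 12; 4; 22; 14; 6; 5; 23; 15; 7; 25; 24; 16; 8; 0; 1], [:: (14, 8)]));
  ((6, 2, 17), ([:: 1; 2; 20; 12; 4; 22; 23; 25; 7; 15; 14; 6; 24; 0; 8; 16; 17; 9; 10; 18; 19; 11; 3; 21; 13; 5], [:: (13, 8)]));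
  ((7, 1, 17), ([:: 19; 11; 10; 18; 20; 21; 3; 2; 1; 9; 17; 16; 8; 0; 25; 7; 15; 23; 5; 13; 12; 4; 22; 14; 6; 24], [:: (12, 8)]));
  ((1, 8, 17), ([:: 13; 5; 3; 11; 9; 1; 20; 22; 24; 23; 4; 12; 10; 2; 21; 19; 0; 8; 16; 18; 26; 7; 15; 17; 25; 6; 14], [:: (17, 2); (8, 8)]));
  ((2, 7, 17), ([:: 15; 7; 26; 24; 23; 21; 13; 5; 3; 11; 19; 17; 9; 1; 2; 10; 18; 16; 8; 0; 25; 6; 14; 22; 20; 12; 4], [:: (24, 1); (11, 8)]));
  ((3, 6, 17), ([:: 7; 15; 14; 6; 25; 23; 4; 12; 10; 2; 21; 19; 0; 8; 16; 17; 18; 26; 24; 5; 13; 11; 3; 22; 20; 1; 9], [:: (18, 1); (9, 8)]));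
  ((4, 5, 17), ([:: 26; 0; 8; 16; 17; 9; 1; 3; 11; 19; 21; 13; 5; 7; 15; 23; 24; 25; 6; 14; 22; 20; 12; 4; 2; 10; 18], [:: (24, 1); (13, 8)]));
  ((5, 4, 17), ([:: 18; 17; 9; 1; 0; 8; 16; 14; 6; 25; 26; 7; 15; 13; 5; 24; 22; 3; 11; 19; 20; 21; 2; 10; 12; 4; 23], [:: (21, 1); (8, 8)]));
  ((6, 3, 17), ([:: 17; 9; 11; 19; 20; 12; 4; 23; 24; 5; 13; 21; 22; 3; 2; 10; 18; 16; 8; 0; 1; 26; 7; 15; 14; 6; 25], [:: (22, 1); (14, 8)]));
  ((7, 2, 17), ([:: 6; 5; 3; 22; 14; 13; 21; 2; 4; 23; 15; 7; 8; 16; 24; 25; 17; 9; 10; 18; 26; 0; 19; 11; 12; 20; 1], [:: (17, 8); (6, 1)]));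
  ((8, 1, 17), ([:: 7; 15; 14; 6; 25; 24; 5; 13; 21; 22; 23; 4; 12; 20; 19; 11; 3; 2; 10; 18; 17; 9; 1; 26; 0; 8; 16], [:: (23, 1); (13, 8)]));
  ((1, 9, 17), ([:: 26; 18; 10; 8; 16; 14; 6; 4; 24; 22; 2; 0; 20; 12; 11; 19; 27; 1; 21; 13; 5; 3; 23; 25; 17; 9; 7; 15], [:: (14, 8); (5, 2)]));
  ((2, 8, 17), ([:: 19; 11; 3; 5; 13; 21; 23; 24; 26; 6; 14; 22; 20; 12; 4; 2; 10; 18; 16; 8; 0; 1; 9; 17; 15; 7; 27; 25], [:: (26, 2); (24, 1); (13, 8)]));
  ((3, 7, 17), ([:: 7; 15; 17; 9; 1; 21; 13; 5; 3; 11; 19; 18; 10; 12; 20; 0; 8; 16; 14; 6; 26; 27; 25; 23; 24; 4; 2; 22], [:: (13, 8)]));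
  ((4, 6, 17), ([:: 23; 22; 20; 21; 13; 5; 3; 1; 9; 17; 25; 24; 16; 8; 0; 2; 4; 12; 14; 6; 26; 18; 10; 11; 19; 27; 7; 15], [:: (12, 8)]));
  ((5, 5, 17), ([:: 0; 1; 21; 23; 24; 4; 12; 13; 5; 3; 11; 19; 20; 22; 2; 10; 18; 26; 6; 14; 16; 8; 9; 17; 25; 27; 7; 15], [:: (11, 8)]));
  ((6, 4, 17), ([:: 25; 5; 13; 15; 7; 6; 14; 12; 4; 3; 11; 19; 20; 0; 8; 16; 17; 9; 1; 21; 23; 24; 22; 2; 10; 18; 26; 27], [:: (12, 8)]));
  ((7, 3, 17), ([:: 0; 8; 9; 1; 27; 25; 5; 13; 21; 20; 19; 17; 16; 24; 4; 12; 11; 3; 2; 10; 18; 26; 6; 14; 22; 23; 15; 7], [:: (8, 8)]));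
  ((8, 2, 17), ([:: 6; 14; 13; 5; 4; 12; 10; 2; 22; 20; 21; 1; 9; 17; 25; 24; 16; 8; 7; 15; 23; 3; 11; 19; 18; 26; 27; 0], [:: (10, 8)]));
  ((9, 1, 17), ([:: 26; 6; 14; 13; 5; 4; 12; 20; 22; 23; 15; 7; 27; 0; 8; 16; 24; 25; 17; 18; 19; 11; 3; 2; 10; 9; 1; 21], [:: (8, 8)]));
  ((2, 9, 17), ([:: 7; 15; 23; 25; 27; 28; 1; 9; 17; 19; 11; 3; 5; 13; 21; 22; 14; 6; 4; 12; 20; 18; 10; 2; 0; 8; 16; 24; 26], [:: (28, 1); (26, 2); (13, 8)]));
  ((1, 6, 18), ([:: 13; 5; 23; 21; 19; 11; 3; 1; 25; 7; 15; 17; 9; 10; 18; 0; 2; 20; 12; 4; 22; 14; 6; 24; 16; 8], [:: (11, 8)]));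
  ((2, 5, 18), ([:: 2; 1; 9; 17; 25; 23; 15; 7; 5; 13; 21; 19; 11; 3; 4; 12; 20; 22; 14; 6; 24; 16; 8; 10; 18; 0], [:: (13, 8)]));
  ((3, 4, 18), ([:: 22; 23; 15; 7; 8; 16; 14; 6; 24; 0; 18; 10; 2; 20; 12; 4; 5; 13; 21; 3; 1; 19; 11; 9; 17; 25], [:: (12, 8)]));
  ((4, 3, 18), ([:: 16; 18; 19; 20; 2; 10; 8; 0; 1; 9; 17; 25; 7; 15; 23; 5; 13; 21; 3; 11; 12; 4; 22; 24; 6; 14], [:: (8, 8)]));
  ((5, 2, 18), ([:: 22; 4; 12; 13; 5; 7; 15; 23; 24; 6; 14; 16; 8; 0; 25; 17; 9; 1; 19; 18; 10; 2; 20; 21; 3; 11], [:: (11, 8)]));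
  ((6, 1, 18), ([:: 16; 8; 0; 18; 10; 12; 20; 2; 3; 11; 19; 1; 9; 17; 25; 7; 15; 14; 6; 24; 23; 22; 21; 13; 5; 4], [:: (14, 8)]));
  ((1, 7, 18), ([:: 22; 24; 26; 1; 9; 17; 25; 23; 4; 12; 20; 18; 10; 2; 21; 13; 5; 3; 11; 19; 0; 8; 16; 14; 6; 7; 15], [:: (8, 8)]));
  ((2, 6, 18), ([:: 9; 17; 18; 10; 12; 20; 1; 2; 4; 6; 14; 22; 3; 11; 19; 21; 13; 5; 24; 16; 8; 0; 25; 23; 15; 7; 26], [:: (14, 8)]));
  ((3, 5, 18), ([:: 21; 19; 20; 18; 10; 2; 1; 26; 0; 8; 16; 24; 5; 13; 11; 3; 22; 14; 6; 25; 17; 9; 7; 15; 23; 4; 12], [:: (11, 8)]));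
  ((4, 4, 18), ([:: 24; 23; 25; 17; 9; 1; 2; 10; 11; 3; 22; 14; 6; 4; 12; 20; 18; 26; 7; 15; 16; 8; 0; 19; 21; 13; 5], [:: (9, 8)]));
  ((5, 3, 18), ([:: 25; 6; 14; 15; 7; 26; 1; 9; 17; 19; 0; 8; 16; 24; 5; 13; 21; 20; 18; 10; 2; 3; 11; 12; 4; 23; 22], [:: (8, 8)]));
  ((6, 2, 18), ([:: 14; 6; 4; 12; 20; 21; 13; 5; 3; 11; 19; 0; 8; 16; 15; 7; 26; 18; 10; 2; 1; 9; 17; 25; 24; 23; 22], [:: (11, 8)]));
  ((7, 1, 18), ([:: 5; 13; 21; 22; 14; 6; 4; 12; 11; 3; 2; 10; 18; 17; 9; 1; 20; 19; 0; 8; 16; 24; 25; 26; 7; 15; 23], [:: (10, 8)]));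
  ((1, 8, 18), ([:: 7; 5; 25; 17; 9; 11; 19; 27; 1; 21; 13; 15; 23; 3; 4; 6; 14; 22; 2; 0; 20; 12; 10; 18; 26; 24; 16; 8], [:: (16, 8); (6, 2)]));
  ((2, 7, 18), ([:: 0; 2; 3; 11; 19; 27; 1; 21; 13; 5; 7; 15; 23; 25; 17; 9; 10; 18; 26; 24; 16; 8; 6; 14; 22; 20; 12; 4], [:: (14, 8); (3, 1)]));
  ((3, 6, 18), ([:: 7; 15; 17; 9; 11; 19; 27; 1; 21; 13; 5; 6; 14; 22; 2; 0; 20; 12; 4; 3; 23; 25; 26; 18; 10; 8; 16; 24], [:: (14, 8); (4, 1)]));
  ((4, 5, 18), ([:: 14; 6; 5; 13; 12; 4; 24; 26; 25; 27; 7; 15; 17; 9; 1; 21; 23; 3; 11; 19; 20; 0; 8; 16; 18; 10; 2; 22], [:: (20, 1); (11, 8)]));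
  ((5, 4, 18), ([:: 23; 22; 21; 13; 5; 25; 24; 16; 8; 0; 2; 10; 18; 20; 12; 4; 3; 11; 19; 17; 9; 1; 27; 7; 15; 14; 6; 26], [:: (25, 1); (11, 8)]));
  ((6, 3, 18), ([:: 3; 2; 10; 18; 26; 27; 19; 11; 13; 21; 23; 15; 7; 8; 16; 24; 22; 14; 6; 5; 4; 12; 20; 0; 1; 9; 17; 25], [:: (15, 8); (1, 1)]));
  ((7, 2, 18), ([:: 22; 14; 6; 5; 3; 23; 15; 7; 8; 16; 24; 4; 2; 1; 21; 13; 12; 20; 0; 27; 19; 11; 10; 18; 26; 25; 17; 9], [:: (19, 8); (6, 1)]));
  ((8, 1, 18), ([:: 27; 26; 18; 10; 2; 1; 0; 20; 12; 4; 3; 11; 19; 21; 13; 5; 6; 14; 22; 23; 15; 7; 8; 16; 24; 25; 17; 9], [:: (14, 8); (1, 1)]));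
  ((1, 9, 18), ([:: 5; 7; 15; 23; 2; 4; 6; 8; 16; 24; 3; 1; 22; 14; 12; 20; 28; 26; 18; 10; 9; 17; 25; 27; 19; 11; 13; 21; 0], [:: (16, 8); (7, 2)]));
  ((2, 8, 18), ([:: 9; 1; 28; 7; 15; 17; 19; 11; 3; 24; 22; 21; 13; 5; 26; 27; 6; 14; 16; 8; 0; 2; 10; 18; 20; 12; 4; 25; 23], [:: (24, 2); (22, 1); (9, 8)]));
  ((3, 7, 18), ([:: 7; 15; 14; 6; 5; 13; 21; 22; 1; 3; 24; 26; 28; 20; 12; 4; 25; 23; 2; 10; 18; 16; 8; 0; 27; 19; 11; 9; 17], [:: (13, 8)]));
  ((4, 6, 18), ([:: 27; 28; 20; 21; 22; 1; 9; 17; 19; 11; 3; 5; 13; 15; 7; 6; 14; 12; 4; 25; 23; 2; 10; 18; 26; 24; 16; 8; 0], [:: (8, 8)]));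
  ((5, 5, 18), ([:: 26; 18; 10; 9; 17; 16; 8; 6; 14; 15; 7; 5; 13; 21; 0; 28; 1; 22; 20; 12; 4; 25; 27; 19; 11; 3; 24; 23; 2], [:: (11, 8)]));
  ((6, 4, 18), ([:: 12; 4; 5; 13; 15; 7; 9; 17; 25; 26; 28; 27; 6; 14; 22; 1; 3; 11; 19; 20; 21; 0; 8; 16; 24; 23; 2; 10; 18], [:: (11, 8)]));
  ((7, 3, 18), ([:: 5; 13; 14; 6; 8; 16; 15; 7; 9; 17; 18; 10; 2; 23; 24; 3; 11; 19; 27; 26; 25; 4; 12; 20; 28; 1; 22; 21; 0], [:: (10, 8)]));
  ((8, 2, 18), ([:: 28; 7; 15; 14; 6; 8; 16; 24; 25; 17; 9; 1; 22; 23; 2; 10; 18; 26; 27; 0; 21; 20; 19; 11; 3; 4; 12; 13; 5], [:: (9, 8)]));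
  ((9, 1, 18), ([:: 5; 7; 15; 16; 8; 0; 28; 20; 12; 13; 21; 22; 14; 6; 27; 19; 11; 10; 18; 26; 25; 4; 3; 24; 23; 2; 1; 9; 17], [:: (14, 8)]));
  ((2, 9, 18), ([:: 21; 20; 18; 16; 8; 0; 22; 24; 2; 10; 12; 4; 26; 28; 6; 14; 15; 7; 29; 27; 5; 13; 11; 3; 25; 23; 1; 9; 17; 19], [:: (21, 1); (18, 2); (9, 8)]))].

Fixpoint lk (t : seq (nat * nat * nat * (seq nat * seq (nat * nat)))) a b c :=
  match t with
  | [::] => ([::], [::])
  | (key, e) :: t' => if key == (a, b, c) then e else lk t' a b c
  end.

Definition sB c := maxn 9 (16 - c).
Definition inA a b c := [&& 1 <= a, 1 <= b, a + b <= 6, 15 <= a + b + c, c <= 24,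
  (4 %| a + b + c + 1) ==> (3 <= a + b) & ~~ (8 %| a + b + c + 1)].
Definition inB a b c := [&& 1 <= a, 1 <= b, 1 <= c, c <= 18, maxn 7 (15 - c) <= a + b,
  a + b <= sB c + 2 & (a + b == sB c + 2) ==> (a == 2)].
Definition n8 a b c := if a + b <= 6 then 17 <= c else 11 <= c.
Definition n2 a b c := [&& 7 <= a + b, sB c <= a + b, a <= 2 & sB c - 1 <= b].
Definition n1 a b c := [&& 7 <= a + b, sB c <= a + b, 2 <= a &
  (a + b == sB c) || ((a == 2) && (sB c - 1 <= b))].
Definition needed a b c :=
  [seq k <- [:: 8; 2; 1] | if k == 8 then n8 a b c else if k == 2 then n2 a b c else n1 a b c].

Definition entry_ok a b c :=
  let: (h, cs) := lk tbl a b c in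
  let v := a + b + c + 1 in
  [&& perm_eq h (iota 0 v), perm_eq (path_lengths v h) (L128 a b c), valid v h cs &
      perm_eq (map snd cs) (needed a b c)].

Definition check_all :=
  all (fun a => all (fun b => all (fun c => (inA a b c || inB a b c) ==> entry_ok a b c)
     (iota 1 24)) (iota 1 16)) (iota 1 16).

Lemma check_all_ok : check_all = true.
Proof. vm_compute. reflexivity. Qed.


Ltac solve_in := repeat (apply/andP; split); try lia; try (apply/implyP; lia).

Lemma reduce a b c : 1 <= a -> 1 <= b -> 1 <= c -> 15 <= a + b + c ->
  ((4 %| a + b + c + 1) -> 3 <= a + b) -> ((8 %| a + b + c + 1) -> 7 <= a + b) ->
  exists a0 b0 c0, (inA a0 b0 c0 || inB a0 b0 c0) /\ a0 <= a /\ b0 <= b /\ c0 <= c /\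
    (b - b0) %% 2 = 0 /\ (c - c0) %% 8 = 0 /\
    (~~ n1 a0 b0 c0 -> a0 = a) /\ (~~ n2 a0 b0 c0 -> b0 = b) /\ (~~ n8 a0 b0 c0 -> c0 = c).
Proof.
move=> ha hb hc hv h4 h8.
case: (leqP (a + b) 6) => hab.
{ pose c0 := if c <= 24 then c else 17 + (c - 17) %% 8.
  exists a, b, c0; rewrite /inA /n8 /n1 /n2 /c0.
  case: (leqP c 24) => hc24; repeat split; try lia.
  all: try (apply/orP; left; rewrite /inA; solve_in).
  all: rewrite hab /=; lia. }
clear h4 h8.
pose c0 := if c <= 18 then c else 11 + (c - 11) %% 8.
have hc0 : c0 <= c /\ (c - c0) %% 8 = 0 /\ (c0 != c -> 11 <= c0) /\ 1 <= c0 <= 18 /\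
           maxn 7 (15 - c0) <= a + b.
  rewrite /c0; case: (leqP c 18) => h; lia.
move: hc0 => [hc0c [hc0m [hc0n [hc01 hc0s]]]].
clearbody c0.
have hn8 : ~~ n8 a b c0 -> c0 = c.
  move=> H; case: (eqVneq c0 c) => // /hc0n h11; move: H; rewrite /n8; case: ifP; lia.
set s := sB c0.
have hs : s = maxn 9 (16 - c0) by [].
case: (leqP (a + b) (s + 1)) => hab2.
  exists a, b, c0; repeat split; try lia; try (by move=> H; apply: hn8).
  apply/orP; right; rewrite /inB -/s; solve_in.
case: (leqP b (s - 2)) => hb2.
  exists (s - b), b, c0; repeat split; try lia.
  - apply/orP; right; rewrite /inB -/s; solve_in.
  - rewrite /n1 -/s => /negP H; exfalso; apply: H; lia.
  - rewrite /n8 => H; apply: hn8; rewrite /n8; move: H; case: ifP; case: ifP; lia.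
pose b0 := if (b - (s - 1)) %% 2 == 0 then s - 1 else s.
pose a0 := if a == 1 then 1 else 2.
have hb0 : b0 <= b /\ (b - b0) %% 2 = 0 /\ s - 1 <= b0 <= s.
  rewrite /b0; case: ifP => /eqP h; lia.
have ha0 : a0 <= a /\ 1 <= a0 <= 2 /\ (a0 = 1 -> a = 1).
  rewrite /a0; case: ifP => /eqP h; lia.
exists a0, b0, c0; repeat split; try lia.
- apply/orP; right; rewrite /inB -/s; solve_in.
- rewrite /n1 -/s => /negP H; case: (ha0) => _ [_ h1]; apply/eqP; case: eqP => // ne.
  exfalso; apply: H; lia.
- rewrite /n2 -/s => /negP H; exfalso; apply: H; lia.
- rewrite /n8 => H; apply: hn8; rewrite /n8; move: H; case: ifP; case: ifP; lia.
Qed.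


Lemma base_ok a b c : inA a b c || inB a b c -> entry_ok a b c.
Proof.
move=> hin.
have [ha hb hc] : [/\ a \in iota 1 16, b \in iota 1 16 & c \in iota 1 24].
  rewrite !mem_iota; case/orP: (hin).
    by move=> /and5P [? ? ? ? /andP[? _]]; split; lia.
  by rewrite /inB /sB => /and5P [? ? ? ? /andP[? /andP[? _]]]; split; lia.
have := check_all_ok; rewrite /check_all => /allP /(_ _ ha) /allP /(_ _ hb) /allP /(_ _ hc).
by rewrite hin.
Qed.

Lemma perm_flat_map (F : nat -> seq nat) (s t : seq nat) :
  perm_eq s t -> perm_eq (flatten (map F s)) (flatten (map F t)).
Proof.
move=> hst; apply/permP => P; rewrite !count_flatten -!map_comp.
by apply: perm_sumn; apply: perm_map.
Qed.

Lemma sumn_filter0 (G : nat -> nat) (fl : pred nat) s :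
  (forall k, ~~ fl k -> G k = 0) -> sumn (map G (filter fl s)) = sumn (map G s).
Proof.
move=> H; elim: s => [|k s IH] //=; case: ifP => hk /=; rewrite IH //.
by rewrite H ?hk.
Qed.

Lemma flat_filter0 (F : nat -> seq nat) (fl : pred nat) s :
  (forall k, ~~ fl k -> F k = [::]) -> flatten (map F (filter fl s)) = flatten (map F s).
Proof.
move=> H; elim: s => [|k s IH] //=; case: ifP => hk /=; rewrite IH //.
by rewrite H ?hk.
Qed.

Lemma count_L128 (P : pred nat) a b c :
  count P (L128 a b c) = P 1 * a + P 2 * b + P 8 * c.
Proof. by rewrite /L128 !count_cat !count_nseq addnA. Qed.

Lemma arith8 (x y z : bool) a0 a b0 b c0 c : a0 <= a -> b0 <= b -> c0 <= c ->
  x * a0 + (y * b0 + z * c0) + (z * (c - c0) + (y * (b - b0) + (x * (a - a0) + 0))) =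
  x * a + (y * b + z * c).
Proof. by case: x; case: y; case: z => /=; lia. Qed.

Lemma arithv a0 a b0 b c0 c : a0 <= a -> b0 <= b -> c0 <= c ->
  a + b + c + 1 = a0 + b0 + c0 + 1 + (c - c0 + (b - b0) + (a - a0)).
Proof. lia. Qed.

Lemma suff_dir a b c : 1 <= a -> 1 <= b -> 1 <= c -> 15 <= a + b + c ->
  ((4 %| a + b + c + 1) -> 3 <= a + b) -> ((8 %| a + b + c + 1) -> 7 <= a + b) ->
  exists h, Pv (a + b + c + 1) h (L128 a b c).
Proof.
move=> ha hb hc hv h4 h8.
case: (reduce ha hb hc hv h4 h8) => a0 [b0 [c0 [hin [ha0 [hb0 [hc0 [hbm [hcm [e1 [e2 e3]]]]]]]]]].
have := base_ok hin; rewrite /entry_ok.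
case: (lk tbl a0 b0 c0) => h0 cs /and4P [hh hl hval hty].
pose g k := if k == 8 then (c - c0) %/ 8 else if k == 2 then (b - b0) %/ 2 else a - a0.
have hP0 : Pv (a0 + b0 + c0 + 1) h0 (L128 a0 b0 c0) by [].
case: (multi g hP0 hval) => h' hP'.
pose fl k := if k == 8 then n8 a0 b0 c0 else if k == 2 then n2 a0 b0 c0 else n1 a0 b0 c0.
have hG : forall k, ~~ fl k -> g k = 0.
  move=> k; rewrite /fl /g; case: ifP => _; first by move/e3 => ->; rewrite subnn.
  case: ifP => _; first by move/e2 => ->; rewrite subnn.
  by move/e1 => ->; rewrite subnn.
have e8 : g 8 * 8 = c - c0 by rewrite /g /= divnK // /dvdn hcm.
have e2' : g 2 * 2 = b - b0 by rewrite /g /= divnK // /dvdn hbm.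
have e1' : g 1 * 1 = a - a0 by rewrite /g /= muln1.
have hsum : sumn [seq g pk.2 * pk.2 | pk <- cs] = (c - c0) + (b - b0) + (a - a0).
  rewrite (_ : [seq g pk.2 * pk.2 | pk <- cs] = [seq g k * k | k <- map snd cs]);
    last by rewrite -map_comp.
  rewrite (perm_sumn (perm_map _ hty)) /needed.
  rewrite (sumn_filter0 (G := fun k => g k * k) (fl := fl)); last by move=> k /hG ->.
  by rewrite /= e8 e2' e1' addn0 addnA.
have hmul : perm_eq (L128 a0 b0 c0 ++ flatten [seq nseq (g pk.2 * pk.2) pk.2 | pk <- cs])
                    (L128 a b c).
  rewrite (_ : [seq nseq (g pk.2 * pk.2) pk.2 | pk <- cs] =
               map (fun k => nseq (g k * k) k) (map snd cs)); last by rewrite -map_comp.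
  apply: (perm_trans (perm_cat (perm_refl _) (perm_flat_map _ hty))).
  rewrite /needed (flat_filter0 (F := fun k => nseq (g k * k) k) (fl := fl));
    last by move=> k /hG ->.
  rewrite /= e8 e2' e1'; apply/permP => P.
  rewrite /L128 !count_cat !count_nseq /=.
  by rewrite arith8.
exists h'; case: hP' => hp1 hp2.
have -> : a + b + c + 1 = a0 + b0 + c0 + 1 + sumn [seq g pk.2 * pk.2 | pk <- cs].
  by rewrite hsum; apply: arithv.
split => //; exact: perm_trans hp2 hmul.
Qed.


Lemma undup_changes (s : seq nat) x :
  size (undup (x :: s)) <= (count (fun e => e.1 != e.2) (zip (x :: s) s)).+1.
Proof.
elim: s x => [|y s IH] x //=.
have := IH y; rewrite /=.
case: (eqVneq x y) => [-> | ne].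
  by rewrite mem_head /=.
set U := (if y \in s then _ else _); case: (x \in y :: s) => /=; lia.
Qed.

Lemma zip_map_count (f : nat -> nat) (s : seq nat) x :
  count (fun e => e.1 != e.2) (zip (map f (x :: s)) (map f s)) =
  count (fun e => f e.1 != f e.2) (zip (x :: s) s).
Proof. by elim: s x => [|y s IH] x //=; rewrite IH. Qed.

Lemma ell8_mod v d x y : d %| v -> d %| 8 -> ell v x y = 8 -> x %% d = y %% d.
Proof.
move=> /dvdnP [q1 hq1] /dvdnP [q2 hq2].
have key : forall u w, u <= w -> (w - u = 8 \/ w - u = v - 8 /\ 8 <= v) -> u %% d = w %% d.
  move=> u w huw [h|[h h8]].
    have -> : w = q2 * d + u by lia.
    by rewrite modnMDl.
  have -> : w = (q1 - q2) * d + u.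
    rewrite mulnBl -hq1 -hq2; lia.
  by rewrite modnMDl.
rewrite /ell /absdiff; case: leqP => hxy H.
  by apply: key => //; lia.
by symmetry; apply: key; lia.
Qed.

Lemma nec_key a b c h d : perm_eq h (iota 0 (a + b + c + 1)) ->
  perm_eq (path_lengths (a + b + c + 1) h) (L128 a b c) ->
  d %| a + b + c + 1 -> d %| 8 -> d <= a + b + 1.
Proof.
set v := a + b + c + 1 => hp hl hdv hd8.
have vpos : 0 < v by rewrite /v addn1.
have dpos : 0 < d by rewrite lt0n; apply/eqP => d0; move: hdv; rewrite d0 dvd0n; lia.
have dle : d <= v by apply: dvdn_leq.
case: h hp hl => [|x t] hp hl.
  by move/perm_size: hp; rewrite size_iota /=; lia.
set r := map (modn^~ d) (x :: t).
have h1 : d <= size (undup r).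
  rewrite -(size_iota 0 d); apply: uniq_leq_size; first exact: iota_uniq.
  move=> i; rewrite mem_iota add0n => /andP[_ hi]; rewrite mem_undup.
  have hin : i \in x :: t by rewrite (perm_mem hp) mem_iota; lia.
  by rewrite -(modn_small hi) /r; apply: (map_f (modn^~ d) hin).
have h2 := undup_changes (map (modn^~ d) t) (x %% d).
have h3 : count (fun e => e.1 != e.2) (zip (x %% d :: map (modn^~ d) t) (map (modn^~ d) t))
          <= count (fun e => ell v e.1 e.2 != 8) (edges (x :: t)).
  rewrite (zip_map_count (modn^~ d)); apply: sub_count => -[y z] /= hne.
  apply/eqP => H; move: hne; by rewrite (ell8_mod hdv hd8 H) eqxx.
have h4 : count (fun e => ell v e.1 e.2 != 8) (edges (x :: t)) = a + b.
  rewrite -(count_map (fun e => ell v e.1 e.2) (fun l => l != 8)) -pl_edges.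
  by rewrite (permP hl (fun l => l != 8)) count_L128 /=; lia.
have er : r = x %% d :: map (modn^~ d) t by [].
rewrite er in h1; lia.
Qed.

Unset Implicit Arguments.

Theorem proposition5p3 (a b c : nat) :
  1 <= a -> 1 <= b -> 1 <= c -> 8 <= (a + b + c + 1)./2 ->
  (exists h : seq nat, ham_path (a + b + c + 1) h /\
      perm_eq (path_lengths (a + b + c + 1) h) (L128 a b c))
  <->
  (forall d : nat, d %| (a + b + c + 1) ->
      count (fun x => d %| x) (L128 a b c) <= (a + b + c + 1) - d).
Proof.
move=> ha hb hc hv2.
have hv : 15 <= a + b + c by move: hv2; rewrite -divn2; lia.
split.
- move=> [h [hp hl]] d hd; rewrite count_L128.
  have dpos : 0 < d by rewrite lt0n; apply/eqP => d0; move: hd; rewrite d0 dvd0n; lia.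
  case: (eqVneq d 1) => [-> | d1].
    rewrite !dvd1n; lia.
  rewrite dvdn1 (negbTE d1) mul0n add0n.
  case: (boolP (d %| 8)) => h8.
    have hk := nec_key hp hl hd h8.
    case: (boolP (d %| 2)) => h2.
      have := dvdn_leq (isT : 0 < 2) h2; rewrite /=; lia.
    by rewrite /=; lia.
  have h2 : ~~ (d %| 2).
    by apply: contra h8 => h2; apply: (dvdn_trans h2).
  by rewrite (negbTE h2) /=; lia.
- move=> H.
  have h4 : (4 %| a + b + c + 1) -> 3 <= a + b.
    by move=> /H; rewrite count_L128 /=; lia.
  have h8 : (8 %| a + b + c + 1) -> 7 <= a + b.
    by move=> /H; rewrite count_L128 /=; lia.
  case: (suff_dir ha hb hc hv h4 h8) => h [hp hl].
  by exists h.
Qed.
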